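(* Let $\mathcal{C}$ be a set of node-disjoint chains with node set $V=\{1,\ldots,n\}$, $T$ a time function for $\mathcal{C}$, and $t_0<t_1$ real numbers. Let $V_C\subseteq V$ with input matrix $B$. Then every LTV system $\dot x(t)=A(t)x(t)+Bu(t)$ with $A(\cdot)$ piecewise continuous and $A(t)\in\mathcal{P}(\mathcal{G}^{\mathcal{C},T})$ for almost every $t\in\mathbb{R}$ is controllable on $[t_0,t_1]$ if and only if $V_C$ contains the set of sources of $\mathcal{C}$.
   Context: Graphs are directed, self-loops allowed. $\mathcal{Q}(G)=\{A\in\mathbb{R}^{n\times n}:\text{for } i\neq j,\ A_{ij}\neq0\iff(j,i)\in E(G)\}$. For $V_C=\{j_1,\ldots,j_m\}$, $B=[e_{j_1},\ldots,e_{j_m}]$ with $e_j$ the $j$th column of $I_n$. An LTV system is controllable on $[t_0,t_1]$ if for any initial state at time $t_0$ and any final state there is an input steering the system from the initial state at $t_0$ to the final state at $t_1$. A chain is a directed path graph with source (start node) and sink (end node); for a non-sink $v$, $v+1$ is its out-neighbor. For node-disjoint chains $\mathcal{C}=\{C_1,\ldots,C_m\}$, $V=\bigcup_iV(C_i)$, $\gamma=|V|-m+1$, a time function is $T:V\to\{1,\ldots,\gamma\}$ with (1) $T(v)=1$ for every source; (2) distinct non-source nodes get distinct values; (3) $T(v)<T(v+1)$ for non-sink $v$. $T_{\max}(v)=\gamma$ for a sink $v$, else $T_{\max}(v)=T(v+1)-1$. $\mathcal{G}^{\mathcal{C},T}$ is the set of graphs $G$ with $V(G)=V$, $\bigcup_iE(C_i)\subseteq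 E(G)$, and $(u,v)\notin E(G)$ whenever $(u,v)\notin\bigcup_iE(C_i)$ and $T_{\max}(u)<T(v)$. $\mathcal{P}(\mathcal{G}^{\mathcal{C},T})=\{A\in\mathbb{R}^{n\times n}: A\in\mathcal{Q}(G)\text{ for some }G\in\mathcal{G}^{\mathcal{C},T}\}$. *)

(* Defs.v *)
From Stdlib Require Import Reals Lra List Arith.
From Coquelicot Require Import Coquelicot.
Import ListNotations.
Open Scope R_scope.

Definition inV (n v : nat) : Prop := (1 <= v <= n)%nat.

(* A chain is a nonempty list of nodes [v_1; ...; v_k] (the directed path
   v_1 -> v_2 -> ... -> v_k); its source is v_1, its sink v_k.
   A set of node-disjoint chains is a list of chains. *)
Definition chains_ok (n : nat) (C : list (list nat)) : Prop :=
  (forall c, In c C -> c <> []) /\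
  NoDup (concat C) /\
  (forall v, In v (concat C) <-> inV n v).

Definition chain_edge (C : list (list nat)) (u v : nat) : Prop :=
  exists c, In c C /\
    exists i, (S i < length c)%nat /\ nth i c 0%nat = u /\ nth (S i) c 0%nat = v.

Definition is_source (C : list (list nat)) (v : nat) : Prop :=
  exists c, In c C /\ hd_error c = Some v.

(* out-neighbour v+1 of a non-sink node v (None for sinks) *)
Fixpoint succ_chain (c : list nat) (v : nat) : option nat :=
  match c with
  | a :: ((b :: _) as r) => if Nat.eqb a v then Some b else succ_chain r v
  | _ => None
  end.

Fixpoint succ (C : list (list nat)) (v : nat) : option nat :=
  match C with
  | [] => None
  | c :: C' => match succ_chain c v with
               | Some w => Some w
               | None => succ C' v
               end
  end.

Definition gamma (n : nat) (C : list (list nat)) : nat := (n - length C + 1)%nat.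

Definition time_function (n : nat) (C : list (list nat)) (T : nat -> nat) : Prop :=
  (forall v, inV n v -> (1 <= T v <= gamma n C)%nat) /\
  (forall v, is_source C v -> T v = 1%nat) /\
  (forall u v, inV n u -> inV n v -> ~ is_source C u -> ~ is_source C v ->
     u <> v -> T u <> T v) /\
  (forall u v, chain_edge C u v -> (T u < T v)%nat).

Definition Tmax (n : nat) (C : list (list nat)) (T : nat -> nat) (v : nat) : nat :=
  match succ C v with
  | Some w => (T w - 1)%nat
  | None => gamma n C
  end.

(* A directed graph on V (self-loops allowed) is given by its edge relation. *)
Definition in_graph_class (n : nat) (C : list (list nat)) (T : nat -> nat)
    (E : nat -> nat -> Prop) : Prop :=
  (forall u v, E u v -> inV n u /\ inV n v) /\
  (forall u v, chain_edge C u v -> E u v) /\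
  (forall u v, inV n u -> inV n v -> ~ chain_edge C u v ->
     (Tmax n C T u < T v)%nat -> ~ E u v).

(* Q(G): for i <> j, A_ij <> 0 iff (j,i) in E(G).  Matrices are functions
   nat -> nat -> R, only entries with indices in V = {1..n} matter. *)
Definition in_Q (n : nat) (E : nat -> nat -> Prop) (M : nat -> nat -> R) : Prop :=
  forall i j, inV n i -> inV n j -> i <> j -> (M i j <> 0 <-> E j i).

Definition in_P (n : nat) (C : list (list nat)) (T : nat -> nat)
    (M : nat -> nat -> R) : Prop :=
  exists E, in_graph_class n C T E /\ in_Q n E M.

Fixpoint sum_to (k : nat) (f : nat -> R) : R :=   (* f 1 + ... + f k *)
  match k with O => 0 | S k' => sum_to k' f + f k end.

Definition Amul (n : nat) (M : nat -> nat -> R) (x : nat -> R) (i : nat) : R :=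
  sum_to n (fun j => M i j * x j).

(* B = [e_{j_1}, ..., e_{j_m}] for V_C = [j_1; ...; j_m]; input w indexed 0..m-1 *)
Fixpoint Bmul_aux (js : list nat) (k : nat) (w : nat -> R) (i : nat) : R :=
  match js with
  | [] => 0
  | j :: js' => (if Nat.eqb j i then w k else 0) + Bmul_aux js' (S k) w i
  end.
Definition Bmul (js : list nat) (w : nat -> R) (i : nat) : R := Bmul_aux js 0 w i.

Definition piecewise_continuous (f : R -> R) : Prop :=
  forall a b, a < b ->
  exists (N : nat) (p : nat -> R),
    p 0%nat = a /\ p N = b /\
    forall k, (k < N)%nat ->
      p k < p (S k) /\
      (forall t, p k < t < p (S k) -> continuous f t) /\
      (exists l, filterlim f (at_right (p k)) (locally l)) /\
      (exists l, filterlim f (at_left (p (S k))) (locally l)).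

Definition mat_piecewise_continuous (n : nat) (A : R -> nat -> nat -> R) : Prop :=
  forall i j, inV n i -> inV n j -> piecewise_continuous (fun t => A t i j).

Definition vec_piecewise_continuous (m : nat) (u : R -> nat -> R) : Prop :=
  forall k, (k < m)%nat -> piecewise_continuous (fun t => u t k).

Fixpoint psum (K : nat) (f : nat -> R) : R :=
  match K with O => 0 | S K' => psum K' f + f K' end.

Definition lebesgue_null (N : R -> Prop) : Prop :=
  forall eps, 0 < eps ->
  exists a b : nat -> R,
    (forall k, a k <= b k) /\
    (forall t, N t -> exists k, a k < t < b k) /\
    (forall K, psum K (fun k => b k - a k) <= eps).

Definition almost_everywhere (P : R -> Prop) : Prop :=
  exists N, lebesgue_null N /\ forall t, ~ N t -> P t.

(* x is a (Caratheodory) solution on [t0,t1] of x' = A(t) x + B u(t):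
   x(t) = x(t0) + int_{t0}^t (A(s) x(s) + B u(s)) ds for t in [t0,t1]. *)
Definition ltv_solution (n : nat) (A : R -> nat -> nat -> R) (VC : list nat)
    (u : R -> nat -> R) (x : R -> nat -> R) (t0 t1 : R) : Prop :=
  forall t, t0 <= t <= t1 -> forall i, inV n i ->
    is_RInt (fun s => Amul n (A s) (x s) i + Bmul VC (u s) i) t0 t (x t i - x t0 i).

Definition controllable (n : nat) (A : R -> nat -> nat -> R) (VC : list nat)
    (t0 t1 : R) : Prop :=
  forall x0 xf : nat -> R,
  exists (u : R -> nat -> R) (x : R -> nat -> R),
    vec_piecewise_continuous (length VC) u /\
    ltv_solution n A VC u x t0 t1 /\
    (forall i, inV n i -> x t0 i = x0 i /\ x t1 i = xf i).

(* Main.v *)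
Require Import Defs.
From Stdlib Require Import Reals Lra Lia List Arith Classical ClassicalEpsilon.
From Coquelicot Require Import Coquelicot.
From mathcomp Require all_boot all_algebra Rstruct.
Import ListNotations.
Open Scope R_scope.

Lemma sum_to_ext n f g : (forall k, (1 <= k <= n)%nat -> f k = g k) -> sum_to n f = sum_to n g.
Proof. induction n; simpl; intros H; auto. rewrite IHn, H; [reflexivity|lia|]. intros; apply H; lia. Qed.

Lemma sum_to_plus n f g : sum_to n (fun k => f k + g k) = sum_to n f + sum_to n g.
Proof. induction n; simpl; [lra|]. rewrite IHn; lra. Qed.

Lemma sum_to_scal n c f : sum_to n (fun k => c * f k) = c * sum_to n f.
Proof. induction n; simpl; [lra|]. rewrite IHn; lra. Qed.

Lemma sum_to_zero n f : (forall k, (1 <= k <= n)%nat -> f k = 0) -> sum_to n f = 0.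
Proof. induction n; simpl; intros H; [lra|]. rewrite IHn, H; [lra|lia|]. intros; apply H; lia. Qed.

Lemma sum_to_swap n m f : sum_to n (fun i => sum_to m (fun j => f i j)) = sum_to m (fun j => sum_to n (fun i => f i j)).
Proof. induction n; simpl. - symmetry; apply sum_to_zero; auto. - rewrite IHn, <- sum_to_plus. reflexivity. Qed.

Lemma sum_to_abs n f : Rabs (sum_to n f) <= sum_to n (fun k => Rabs (f k)).
Proof. induction n; simpl. rewrite Rabs_R0; lra. eapply Rle_trans; [apply Rabs_triang|lra]. Qed.

Lemma sum_to_le n f g : (forall k, (1 <= k <= n)%nat -> f k <= g k) -> sum_to n f <= sum_to n g.
Proof. induction n; simpl; intros H; [lra|]. assert (f (S n) <= g (S n)) by (apply H; lia). assert (sum_to n f <= sum_to n g) by (apply IHn; intros; apply H; lia). lra. Qed.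

Lemma sum_to_const n c : sum_to n (fun _ => c) = INR n * c.
Proof. induction n; simpl sum_to. simpl; lra. rewrite IHn, S_INR; lra. Qed.

Lemma sum_to_single n f s : (1 <= s <= n)%nat -> (forall k, (1 <= k <= n)%nat -> k <> s -> f k = 0) -> sum_to n f = f s.
Proof. induction n; intros Hs H; [lia|]. simpl. destruct (Nat.eq_dec s (S n)).
 - subst. rewrite sum_to_zero; [lra|]. intros; apply H; lia.
 - rewrite IHn; [|lia|intros; apply H; lia]. rewrite (H (S n)); [lra|lia|auto]. Qed.

Lemma is_RInt_sum_to n (f : nat -> R -> R) l a b :
  (forall k, (1 <= k <= n)%nat -> is_RInt (f k) a b (l k)) ->
  is_RInt (fun s => sum_to n (fun k => f k s)) a b (sum_to n l).
Proof. induction n; simpl; intros H.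
 - assert (K := @is_RInt_const R_NormedModule a b 0). change (scal (b - a) 0) with (Rmult (b - a) 0) in K. rewrite Rmult_0_r in K. exact K.
 - apply (is_RInt_plus (fun s => sum_to n (fun k => f k s)) (f (S n))).
   apply IHn; intros; apply H; lia. apply H; lia. Qed.

Lemma ex_RInt_sum_to n (f : nat -> R -> R) a b :
  (forall k, (1 <= k <= n)%nat -> ex_RInt (f k) a b) ->
  ex_RInt (fun s => sum_to n (fun k => f k s)) a b.
Proof. intros H. exists (sum_to n (fun k => RInt (f k) a b)). apply is_RInt_sum_to. intros; apply (RInt_correct (V := R_CompleteNormedModule)); auto. Qed.

Lemma continuous_sum_to n (f : nat -> R -> R) t :
  (forall k, (1 <= k <= n)%nat -> continuous (f k) t) ->
  continuous (fun s => sum_to n (fun k => f k s)) t.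
Proof. induction n; simpl; intros H. apply continuous_const.
 apply (continuous_plus (fun s => sum_to n (fun k => f k s)) (f (S n))). apply IHn; intros; apply H; lia. apply H; lia. Qed.

Lemma is_derive_sum_to n (f df : nat -> R -> R) t :
  (forall k, (1 <= k <= n)%nat -> is_derive (f k) t (df k t)) ->
  is_derive (fun s => sum_to n (fun k => f k s)) t (sum_to n (fun k => df k t)).
Proof. induction n; simpl; intros H. auto_derive; auto.
 apply (is_derive_plus (fun s => sum_to n (fun k => f k s)) (f (S n))). apply IHn; intros; apply H; lia. apply H; lia. Qed.

Lemma ballR x e y : ball x e y <-> Rabs (y - x) < e.
Proof. unfold ball; simpl; unfold AbsRing_ball, abs, minus, plus, opp; simpl. unfold Rminus. tauto. Qed.

Lemma locallyR x (P : R -> Prop) : locally x P <-> exists d, 0 < d /\ forall y, Rabs (y - x) < d -> P y.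
Proof. split.
 - intros [e He]. exists e. split. apply cond_pos. intros y Hy. apply He. apply ballR. auto.
 - intros [d [Hd H]]. exists (mkposreal d Hd). intros y Hy. apply H. apply ballR in Hy. auto. Qed.

Lemma cont_iff g x : continuous g x <-> forall eps, 0 < eps -> exists d, 0 < d /\ forall y, Rabs (y - x) < d -> Rabs (g y - g x) < eps.
Proof. unfold continuous. rewrite filterlim_locally. split.
 - intros H eps He. specialize (H (mkposreal eps He)). apply locallyR in H. destruct H as [d [Hd H]]. exists d; split; [auto|].
   intros y Hy. apply ballR. apply H. auto.
 - intros H eps. apply locallyR. destruct (H eps (cond_pos eps)) as [d [Hd H1]]. exists d; split; [auto|]. intros y Hy. apply ballR. auto. Qed.

Lemma right_lim_iff f x l : filterlim f (at_right x) (locally l) <->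
  forall eps, 0 < eps -> exists d, 0 < d /\ forall y, Rabs (y - x) < d -> x < y -> Rabs (f y - l) < eps.
Proof. rewrite filterlim_locally. split.
 - intros H eps He. specialize (H (mkposreal eps He)). unfold at_right, within in H. apply locallyR in H. destruct H as [d [Hd H]]. exists d; split; [auto|].
   intros y Hy Hxy. apply ballR. apply H; auto.
 - intros H eps. unfold at_right, within. apply locallyR. destruct (H eps (cond_pos eps)) as [d [Hd H1]]. exists d; split; [auto|]. intros y Hy Hxy. apply ballR. auto. Qed.

Lemma left_lim_iff f x l : filterlim f (at_left x) (locally l) <->
  forall eps, 0 < eps -> exists d, 0 < d /\ forall y, Rabs (y - x) < d -> y < x -> Rabs (f y - l) < eps.
Proof. rewrite filterlim_locally. split.
 - intros H eps He. specialize (H (mkposreal eps He)). unfold at_left, within in H. apply locallyR in H. destruct H as [d [Hd H]]. exists d; split; [auto|].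
   intros y Hy Hxy. apply ballR. apply H; auto.
 - intros H eps. unfold at_left, within. apply locallyR. destruct (H eps (cond_pos eps)) as [d [Hd H1]]. exists d; split; [auto|]. intros y Hy Hxy. apply ballR. auto. Qed.

Lemma cont_ext_loc (f g : R -> R) (x d : R) : 0 < d -> (forall y, Rabs (y - x) < d -> f y = g y) -> continuous f x -> continuous g x.
Proof. intros Hd H Hf. apply (continuous_ext_loc (T:=R_UniformSpace) (U:=R_UniformSpace) g f). apply locallyR. exists d; split; [auto|]. intros; auto. auto. Qed.

Lemma cont_bound g c d : c <= d -> (forall t, c <= t <= d -> continuous g t) -> exists M, forall t, c <= t <= d -> Rabs (g t) <= M.
Proof. intros Hcd H. destruct (continuity_ab_maj (fun t => Rabs (g t)) c d Hcd) as [m [Hm _]].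
 - intros t Ht. apply continuity_pt_filterlim. apply (continuous_comp g Rabs). auto. apply continuous_Rabs.
 - exists (Rabs (g m)). auto. Qed.

Definition clamp a b t := Rmax a (Rmin b t).
Lemma clamp_in a b t : a <= b -> a <= clamp a b t <= b.
Proof. intros; unfold clamp, Rmax, Rmin; repeat destruct Rle_dec; lra. Qed.
Lemma clamp_id a b t : a <= t <= b -> clamp a b t = t.
Proof. intros; unfold clamp, Rmax, Rmin; repeat destruct Rle_dec; lra. Qed.
Lemma clamp_lip a b s t : a <= b -> Rabs (clamp a b s - clamp a b t) <= Rabs (s - t).
Proof. intros; unfold clamp, Rmax, Rmin; repeat destruct Rle_dec; unfold Rabs; repeat destruct Rcase_abs; lra. Qed.

Lemma lip_cont f K x : (forall s, Rabs (f s - f x) <= K * Rabs (s - x)) -> continuous f x.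
Proof. intros H. apply cont_iff. intros eps He. exists (eps / (Rabs K + 1)). split.
 apply Rdiv_lt_0_compat; [lra| pose proof (Rabs_pos K); lra].
 intros y Hy. eapply Rle_lt_trans. apply H. 
 assert (Rabs K + 1 > 0) by (pose proof (Rabs_pos K); lra).
 apply Rle_lt_trans with ((Rabs K + 1) * Rabs (y - x)).
 apply Rmult_le_compat_r. apply Rabs_pos. pose proof (Rle_abs K); lra.
 apply Rmult_lt_reg_l with (/ (Rabs K + 1)). apply Rinv_0_lt_compat; lra.
 rewrite <- Rmult_assoc, Rinv_l by lra. rewrite Rmult_1_l. unfold Rdiv in Hy. lra. Qed.

Lemma clamp_cont a b x : a <= b -> continuous (clamp a b) x.
Proof. intros. apply (lip_cont _ 1). intros; rewrite Rmult_1_l; apply clamp_lip; auto. Qed.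

Definition pcw (a b : R) (f : R -> R) : Prop :=
  exists (N : nat) (p : nat -> R), p O = a /\ p N = b /\
   forall k, (k < N)%nat -> p k < p (S k) /\
     exists g : R -> R, (forall t, p k <= t <= p (S k) -> continuous g t) /\
                        (forall t, p k < t < p (S k) -> f t = g t).

Lemma part_mono N (p : nat -> R) : (forall k, (k < N)%nat -> p k < p (S k)) ->
  forall i j, (i <= j <= N)%nat -> p i <= p j.
Proof. intros H i j Hij. induction j. assert (i = 0)%nat by lia; subst; lra.
 destruct (Nat.eq_dec i (S j)). subst; lra. assert (p i <= p j) by (apply IHj; lia). assert (p j < p (S j)) by (apply H; lia). lra. Qed.

Lemma part_smono N (p : nat -> R) : (forall k, (k < N)%nat -> p k < p (S k)) ->
  forall i j, (i < j <= N)%nat -> p i < p j.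
Proof. intros H i j Hij. destruct j. lia. assert (p i <= p j) by (apply (part_mono N); auto; lia). assert (p j < p (S j)) by (apply H; lia). lra. Qed.

Lemma pcw_ex_RInt a b f : pcw a b f -> ex_RInt f a b.
Proof. intros (N & p & H0 & HN & H). subst. assert (Hmono : forall k, (k < N)%nat -> p k < p (S k)) by (intros; apply H; auto).
 assert (forall m, (m <= N)%nat -> ex_RInt f (p O) (p m)).
 { induction m; intros Hm. exists 0. apply (is_RInt_point (V:=R_NormedModule)).
   apply (ex_RInt_Chasles f _ (p m)). apply IHm; lia.
   destruct (H m) as [Hlt [g [Hg1 Hg2]]]; [lia|].
   apply (ex_RInt_ext g). rewrite Rmin_left, Rmax_right by lra. intros; symmetry; auto.
   apply (ex_RInt_continuous (V:=R_CompleteNormedModule)). rewrite Rmin_left, Rmax_right by lra. auto. }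
 auto. Qed.

Lemma pcw_bound a b f : pcw a b f -> exists M, forall t, a <= t <= b -> Rabs (f t) <= M.
Proof. intros (N & p & H0 & HN & H). subst. assert (Hmono : forall k, (k < N)%nat -> p k < p (S k)) by (intros; apply H; auto).
 assert (forall m, (m <= N)%nat -> exists M, forall t, p O <= t <= p m -> Rabs (f t) <= M).
 { induction m; intros Hm. exists (Rabs (f (p O))). intros t Ht. replace t with (p O) by lra. lra.
   destruct IHm as [M HM]; [lia|].
   destruct (H m) as [Hlt [g [Hg1 Hg2]]]; [lia|].
   destruct (cont_bound g (p m) (p (S m)) ltac:(lra) Hg1) as [Mg HMg].
   exists (Rmax M (Rmax Mg (Rabs (f (p (S m)))))). intros t Ht.
   assert (p O <= p m) by (apply (part_mono N); auto; lia).
   destruct (Rle_dec t (p m)). eapply Rle_trans; [apply HM; lra| apply Rmax_l].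
   destruct (Req_dec t (p (S m))). subst. eapply Rle_trans; [|apply Rmax_r]. apply Rmax_r.
   rewrite Hg2 by lra. eapply Rle_trans; [|apply Rmax_r]. eapply Rle_trans; [|apply Rmax_l]. apply HMg; lra. }
 auto. Qed.

Lemma pcw_cont a b f : pcw a b f -> exists L : list R, forall t, a < t < b -> ~ In t L -> continuous f t.
Proof. intros (N & p & H0 & HN & H). subst. assert (Hmono : forall k, (k < N)%nat -> p k < p (S k)) by (intros; apply H; auto). exists (map p (seq 0 (S N))). intros t Ht HL.
 assert (Hnp : forall k, (k <= N)%nat -> t <> p k).
 { intros k Hk E. apply HL. subst. apply in_map. apply in_seq. lia. }
 assert (Hcov : forall m, (m <= N)%nat -> p O < t < p m -> exists k, (k < m)%nat /\ p k < t < p (S k)).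
 { induction m; intros Hm Ht'. lra.
   destruct (Rlt_dec t (p m)). destruct IHm as [k Hk]; [lia| lra |]. exists k; split; [lia|tauto].
   exists m. split; [lia|]. assert (t <> p m) by (apply Hnp; lia). lra. }
 destruct (Hcov N) as [k [Hk Hkt]]; [lia|lra|].
 destruct (H k Hk) as [Hlt [g [Hg1 Hg2]]].
 apply (cont_ext_loc g f t (Rmin (t - p k) (p (S k) - t))).
 apply Rmin_pos; lra.
 intros y Hy. symmetry. apply Hg2. assert (Rabs (y - t) < t - p k) by (eapply Rlt_le_trans; [apply Hy| apply Rmin_l]).
 assert (Rabs (y - t) < p (S k) - t) by (eapply Rlt_le_trans; [apply Hy| apply Rmin_r]).
 unfold Rabs in *; destruct Rcase_abs; lra.
 apply Hg1; lra. Qed.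

Lemma pcw_mult a b f h : pcw a b f -> (forall t, continuous h t) -> pcw a b (fun t => f t * h t).
Proof. intros (N & p & H0 & HN & H) Hh. exists N, p. repeat split; auto.
 - apply H; auto.
 - destruct (H k H1) as [Hlt [g [Hg1 Hg2]]]. exists (fun t => g t * h t). split.
   + intros t Ht. apply (continuous_mult (U:=R_UniformSpace) (K:=R_AbsRing) g h); auto.
   + intros t Ht. rewrite Hg2; auto. Qed.

Lemma cont_pcw a b f : a < b -> (forall t, continuous f t) -> pcw a b f.
Proof. intros Hab Hf. exists 1%nat, (fun k => match k with O => a | _ => b end). repeat split; auto.
 - assert (k = O) by lia. subst. auto.
 - exists f. split; auto. Qed.

Lemma glue_cont g x :
  (forall eps, 0 < eps -> exists d, 0 < d /\ forall y, Rabs (y - x) < d -> y < x -> Rabs (g y - g x) < eps) ->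
  (forall eps, 0 < eps -> exists d, 0 < d /\ forall y, Rabs (y - x) < d -> x < y -> Rabs (g y - g x) < eps) ->
  continuous g x.
Proof. intros Hl Hr. apply cont_iff. intros eps He.
 destruct (Hl eps He) as [d1 [Hd1 H1]]. destruct (Hr eps He) as [d2 [Hd2 H2]].
 exists (Rmin d1 d2). split. apply Rmin_pos; auto. intros y Hy.
 assert (Rabs (y - x) < d1) by (eapply Rlt_le_trans; [apply Hy|apply Rmin_l]).
 assert (Rabs (y - x) < d2) by (eapply Rlt_le_trans; [apply Hy|apply Rmin_r]).
 destruct (Rtotal_order y x) as [Hyx|[Hyx|Hyx]]. auto. subst. rewrite Rminus_diag, Rabs_R0; auto. auto. Qed.

Lemma pc_pcw a b f : a < b -> piecewise_continuous f -> pcw a b f.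
Proof. intros Hab Hpc. destruct (Hpc a b Hab) as (N & p & H0 & HN & H).
 exists N, p. repeat split; auto. apply H; auto.
 destruct (H k H1) as [Hlt [Hc [[l1 Hl1] [l2 Hl2]]]].
 set (g := fun t => if Rle_dec t (p k) then l1 else if Rle_dec (p (S k)) t then l2 else f t).
 assert (Hgi : forall t, p k < t < p (S k) -> f t = g t).
 { intros t Ht. unfold g. destruct Rle_dec; [lra|]. destruct Rle_dec; [lra|]. auto. }
 exists g. split; auto.
 intros t Ht. destruct (Req_dec t (p k)).
 - subst t. apply glue_cont.
   + intros eps He. exists 1. split; [lra|]. intros y _ Hy. unfold g. destruct Rle_dec; [|lra]. destruct Rle_dec; [|lra].
     rewrite Rminus_diag, Rabs_R0; auto.
   + intros eps He. destruct (proj1 (right_lim_iff f (p k) l1) Hl1 eps He) as [d [Hd Hd1]].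
     exists (Rmin d (p (S k) - p k)). split. apply Rmin_pos; lra. intros y Hy Hky.
     assert (Rabs (y - p k) < d) by (eapply Rlt_le_trans; [apply Hy|apply Rmin_l]).
     assert (Rabs (y - p k) < p (S k) - p k) by (eapply Rlt_le_trans; [apply Hy|apply Rmin_r]).
     assert (y < p (S k)) by (unfold Rabs in *; destruct Rcase_abs; lra).
     rewrite <- (Hgi y) by lra. unfold g. destruct Rle_dec; [|lra]. auto.
 - destruct (Req_dec t (p (S k))).
   + subst t. apply glue_cont.
     * intros eps He. destruct (proj1 (left_lim_iff f (p (S k)) l2) Hl2 eps He) as [d [Hd Hd1]].
       exists (Rmin d (p (S k) - p k)). split. apply Rmin_pos; lra. intros y Hy Hky.
       assert (Rabs (y - p (S k)) < d) by (eapply Rlt_le_trans; [apply Hy|apply Rmin_l]).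
       assert (Rabs (y - p (S k)) < p (S k) - p k) by (eapply Rlt_le_trans; [apply Hy|apply Rmin_r]).
       assert (p k < y) by (unfold Rabs in *; destruct Rcase_abs; lra).
       rewrite <- (Hgi y) by lra. unfold g. destruct Rle_dec; [lra|]. destruct Rle_dec; [|lra]. auto.
     * intros eps He. exists 1. split; [lra|]. intros y _ Hy. unfold g. destruct Rle_dec; [lra|]. destruct Rle_dec; [|lra].
       destruct Rle_dec; [lra|]. destruct Rle_dec; [|lra]. rewrite Rminus_diag, Rabs_R0; auto.
   + apply (cont_ext_loc f g t (Rmin (t - p k) (p (S k) - t))). apply Rmin_pos; lra.
     intros y Hy. apply Hgi. assert (Rabs (y - t) < t - p k) by (eapply Rlt_le_trans; [apply Hy| apply Rmin_l]).
     assert (Rabs (y - t) < p (S k) - t) by (eapply Rlt_le_trans; [apply Hy| apply Rmin_r]).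
     unfold Rabs in *; destruct Rcase_abs; lra.
     apply Hc; lra. Qed.

Lemma pcw_reflect a b f : pcw a b f -> pcw a b (fun t => f (a + b - t)).
Proof. intros (N & p & H0 & HN & H).
 exists N, (fun k => a + b - p (N - k)%nat). repeat split.
 - rewrite Nat.sub_0_r, HN. ring.
 - rewrite Nat.sub_diag, H0. ring.
 - destruct (H (N - S k)%nat) as [Hlt _]; [lia|]. replace (S (N - S k)) with (N - k)%nat in Hlt by lia. lra.
 - destruct (H (N - S k)%nat) as [Hlt [g [Hg1 Hg2]]]; [lia|]. replace (S (N - S k)) with (N - k)%nat in * by lia.
   exists (fun t => g (a + b - t)). split.
   + intros t Ht. apply (continuous_comp (U:=R_UniformSpace) (V:=R_UniformSpace) (W:=R_UniformSpace) (fun t => a + b - t) g).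
     apply (lip_cont _ 1). intros s. replace (a + b - s - (a + b - t)) with (- (s - t)) by ring. rewrite Rabs_Ropp; lra.
     apply Hg1. lra.
   + intros t Ht. apply Hg2. lra. Qed.

Lemma exR_plus (f g : R -> R) a b : ex_RInt f a b -> ex_RInt g a b -> ex_RInt (fun t => f t + g t) a b.
Proof. intros; apply (ex_RInt_plus (V:=R_CompleteNormedModule) f g); auto. Qed.
Lemma exR_minus (f g : R -> R) a b : ex_RInt f a b -> ex_RInt g a b -> ex_RInt (fun t => f t - g t) a b.
Proof. intros; apply (ex_RInt_minus (V:=R_CompleteNormedModule) f g); auto. Qed.
Lemma exR_cont (f : R -> R) a b : (forall z, Rmin a b <= z <= Rmax a b -> continuous f z) -> ex_RInt f a b.
Proof. intros; apply (ex_RInt_continuous (V:=R_CompleteNormedModule)); auto. Qed.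
Lemma RIntR_plus (f g : R -> R) a b : ex_RInt f a b -> ex_RInt g a b -> RInt (fun t => f t + g t) a b = RInt f a b + RInt g a b.
Proof. intros; apply (RInt_plus (V:=R_CompleteNormedModule) f g); auto. Qed.
Lemma RIntR_minus (f g : R -> R) a b : ex_RInt f a b -> ex_RInt g a b -> RInt (fun t => f t - g t) a b = RInt f a b - RInt g a b.
Proof. intros; apply (RInt_minus (V:=R_CompleteNormedModule) f g); auto. Qed.
Lemma RIntR_chasles (f : R -> R) a b c : ex_RInt f a b -> ex_RInt f b c -> RInt f a b + RInt f b c = RInt f a c.
Proof. intros; apply (RInt_Chasles (V:=R_CompleteNormedModule) f); auto. Qed.
Lemma RIntR_point (f : R -> R) a : RInt f a a = 0.
Proof. apply (RInt_point (V:=R_CompleteNormedModule)). Qed.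
Lemma RIntR_swap (f : R -> R) a b : ex_RInt f a b -> RInt f b a = - RInt f a b.
Proof. intros H. rewrite <- (opp_RInt_swap (V:=R_CompleteNormedModule) f a b H). reflexivity. Qed.
Lemma RIntR_ext (f g : R -> R) a b : (forall x, Rmin a b < x < Rmax a b -> f x = g x) -> RInt f a b = RInt g a b.
Proof. intros; apply (RInt_ext (V:=R_CompleteNormedModule)); auto. Qed.
Lemma exR_ext (f g : R -> R) a b : (forall x, Rmin a b < x < Rmax a b -> f x = g x) -> ex_RInt f a b -> ex_RInt g a b.
Proof. intros; apply (ex_RInt_ext (V:=R_CompleteNormedModule) f); auto. Qed.
Lemma RIntR_correct (f : R -> R) a b : ex_RInt f a b -> is_RInt f a b (RInt f a b).
Proof. intros; apply (RInt_correct (V:=R_CompleteNormedModule)); auto. Qed.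
Lemma RIntR_unique (f : R -> R) a b l : is_RInt f a b l -> RInt f a b = l.
Proof. intros; apply (is_RInt_unique (V:=R_CompleteNormedModule)); auto. Qed.
Lemma RIntR_scal (f : R -> R) a b k : ex_RInt f a b -> RInt (fun t => k * f t) a b = k * RInt f a b.
Proof. intros; apply (RInt_scal (V:=R_CompleteNormedModule)); auto. Qed.
Lemma exR_scal (f : R -> R) a b k : ex_RInt f a b -> ex_RInt (fun t => k * f t) a b.
Proof. intros; apply (ex_RInt_scal (V:=R_CompleteNormedModule)); auto. Qed.

Lemma exR_sub (f : R -> R) a b u v : ex_RInt f a b -> a <= u <= b -> a <= v <= b -> ex_RInt f u v.
Proof. intros H Hu Hv.
 assert (G : forall u v, a <= u <= v -> v <= b -> ex_RInt f u v).
 { intros u' v' H1 H2. apply (ex_RInt_Chasles_2 (V:=R_CompleteNormedModule) f a u' v'). lra.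
   apply (ex_RInt_Chasles_1 (V:=R_CompleteNormedModule) f a v' b). lra. auto. }
 destruct (Rle_dec u v). apply G; lra. apply (ex_RInt_swap (V:=R_CompleteNormedModule)). apply G; lra. Qed.

Lemma RIntR_le (f g : R -> R) a b : a <= b -> ex_RInt f a b -> ex_RInt g a b -> (forall x, a < x < b -> f x <= g x) -> RInt f a b <= RInt g a b.
Proof. intros; apply RInt_le; auto. Qed.

Lemma RIntR_abs_le (f h : R -> R) a b : a <= b -> ex_RInt f a b -> ex_RInt h a b -> (forall x, a < x < b -> Rabs (f x) <= h x) ->
  Rabs (RInt f a b) <= RInt h a b.
Proof. intros Hab Hf Hh H. apply Rabs_le. split.
 - assert (RInt (fun t => - h t) a b <= RInt f a b).
   { apply RIntR_le; auto. apply (exR_ext (fun t => (-1) * h t)). intros; ring. apply exR_scal; auto.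
     intros x Hx. specialize (H x Hx). apply Rabs_le_between in H. lra. }
   rewrite (RIntR_ext _ (fun t => (-1) * h t)) in H0 by (intros; ring). rewrite RIntR_scal in H0 by auto. lra.
 - apply RIntR_le; auto. intros x Hx. specialize (H x Hx). apply Rabs_le_between in H. lra. Qed.

Lemma RIntR_abs_const (f : R -> R) a b M : a <= b -> ex_RInt f a b -> (forall t, a <= t <= b -> Rabs (f t) <= M) -> Rabs (RInt f a b) <= (b - a) * M.
Proof. intros; apply abs_RInt_le_const; auto. Qed.

Lemma int_diff (F : R -> R) a b M u v : ex_RInt F a b -> (forall t, a <= t <= b -> Rabs (F t) <= M) ->
  a <= u <= b -> a <= v <= b -> Rabs (RInt F a v - RInt F a u) <= M * Rabs (v - u).
Proof. intros HF HM Hu Hv.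
 assert (E := RIntR_chasles F a u v ltac:(apply (exR_sub F a b); auto; lra) ltac:(apply (exR_sub F a b); auto; lra)).
 replace (RInt F a v - RInt F a u) with (RInt F u v) by lra.
 destruct (Rle_dec u v).
 - rewrite (Rabs_right (v - u)) by lra. rewrite Rmult_comm. apply RIntR_abs_const; auto. apply (exR_sub F a b); auto. intros; apply HM; lra.
 - rewrite RIntR_swap by (apply (exR_sub F a b); auto). rewrite Rabs_Ropp. rewrite (Rabs_left (v - u)) by lra.
   replace (- (v - u)) with (u - v) by ring. rewrite Rmult_comm. apply RIntR_abs_const; [lra| |]. apply (exR_sub F a b); auto. intros; apply HM; lra. Qed.

Lemma small_zero x C : (forall k, Rabs x <= C * (/2) ^ k) -> x = 0.
Proof. intros H. destruct (Req_dec x 0); auto. exfalso.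
 assert (HC : 0 < C). { specialize (H O). simpl in H. pose proof (Rabs_pos_lt x H0). lra. }
 destruct (pow_lt_1_zero (/2) ltac:(rewrite Rabs_right; lra) (Rabs x / C)) as [N HN].
 apply Rdiv_lt_0_compat; auto. apply Rabs_pos_lt; auto.
 specialize (HN N (le_n N)). specialize (H N). rewrite Rabs_right in HN. 
 apply (Rmult_lt_compat_l C) in HN; auto. unfold Rdiv in HN. rewrite (Rmult_comm (Rabs x)), <- Rmult_assoc, Rinv_r in HN by lra. lra.
 apply Rle_ge, pow_le; lra. Qed.

Lemma fin_max (P : nat -> R -> Prop) n : (forall k, (1 <= k <= n)%nat -> exists M, P k M) ->
  (forall k M M', P k M -> M <= M' -> P k M') -> exists M, 0 <= M /\ forall k, (1 <= k <= n)%nat -> P k M.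
Proof. intros H Hm. induction n. exists 0; split; [lra|]; intros; lia.
 destruct IHn as [M [HM0 HM]]. intros; apply H; lia. destruct (H (S n)) as [M' HM']. lia.
 exists (Rmax M M'). split. eapply Rle_trans; [apply HM0|apply Rmax_l]. intros k Hk. destruct (Nat.eq_dec k (S n)). subst. eapply Hm; [apply HM'| apply Rmax_r].
 eapply Hm; [apply HM; lia| apply Rmax_l]. Qed.

Definition Fint n (K : R -> nat -> nat -> R) (f : R -> nat -> R) (y : R -> nat -> R) i s :=
  sum_to n (fun j => K s i j * y s j) + f s i.

Fixpoint pic n a b K f (c : nat -> R) (k : nat) : R -> nat -> R :=
  match k with
  | O => fun _ i => c i
  | S k' => fun t i => c i + RInt (Fint n K f (pic n a b K f c k') i) a (clamp a b t)
  end.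

Lemma Fint_ok n a b K f y : a < b ->
  (forall i j, inV n i -> inV n j -> pcw a b (fun t => K t i j)) ->
  (forall i, inV n i -> forall t, continuous (fun s => f s i) t) ->
  (forall j, inV n j -> forall t, continuous (fun s => y s j) t) ->
  forall i, inV n i -> ex_RInt (Fint n K f y i) a b.
Proof. intros Hab HK Hf Hy i Hi. unfold Fint. apply exR_plus.
 - apply (ex_RInt_sum_to n (fun j s => K s i j * y s j)). intros j Hj. apply pcw_ex_RInt. apply (pcw_mult a b (fun t => K t i j) (fun s => y s j)).
   apply HK; auto. apply Hy; auto.
 - apply exR_cont. intros; apply Hf; auto. Qed.

Lemma Fint_bound n K f y i s MK My Mf : (forall j, inV n j -> Rabs (K s i j) <= MK) -> (forall j, inV n j -> Rabs (y s j) <= My) ->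
  Rabs (f s i) <= Mf -> 0 <= MK -> Rabs (Fint n K f y i s) <= INR n * MK * My + Mf.
Proof. intros HK Hy Hf HMK. unfold Fint. eapply Rle_trans. apply Rabs_triang. apply Rplus_le_compat; auto.
 eapply Rle_trans. apply sum_to_abs. rewrite Rmult_assoc, <- sum_to_const. apply sum_to_le. intros j Hj. rewrite Rabs_mult.
 apply Rmult_le_compat; auto using Rabs_pos. Qed.

Lemma sum_to_minus n (g h : nat -> R) : sum_to n g - sum_to n h = sum_to n (fun j => g j - h j).
Proof. induction n; simpl; [lra|]. rewrite <- IHn. lra. Qed.

Lemma Fint_diff n K f y1 y0 i s : Fint n K f y1 i s - Fint n K f y0 i s = sum_to n (fun j => K s i j * (y1 s j - y0 s j)).
Proof. unfold Fint. replace (sum_to n (fun j => K s i j * y1 s j) + f s i - (sum_to n (fun j => K s i j * y0 s j) + f s i))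
  with (sum_to n (fun j => K s i j * y1 s j) - sum_to n (fun j => K s i j * y0 s j)) by ring.
 rewrite sum_to_minus. apply sum_to_ext. intros; ring. Qed.

Lemma exp_int L a t : 0 < L -> RInt (fun s => exp (2 * L * (s - a))) a t = (exp (2 * L * (t - a)) - 1) / (2 * L).
Proof. intros HL. apply RIntR_unique.
 assert (H := is_RInt_derive (V:=R_CompleteNormedModule) (fun s => exp (2 * L * (s - a)) / (2 * L)) (fun s => exp (2 * L * (s - a))) a t).
 replace ((exp (2 * L * (t - a)) - 1) / (2 * L)) with (minus (exp (2 * L * (t - a)) / (2 * L)) (exp (2 * L * (a - a)) / (2 * L))).
 apply H.
 - intros x _. auto_derive. auto. unfold Rminus. field. lra.
 - intros x _. apply (ex_derive_continuous (K:=R_AbsRing) (V:=R_NormedModule)). auto_derive. auto.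
 - unfold minus, plus, opp; simpl. rewrite Rminus_diag, Rmult_0_r, exp_0. field. lra. Qed.

Lemma exp_mono x y : x <= y -> exp x <= exp y.
Proof. intros [H|H]. left; apply exp_increasing; auto. subst; lra. Qed.

Lemma lim_bound (u : nat -> R) l x B k : is_lim_seq u (Finite l) -> (forall m, (k <= m)%nat -> Rabs (u m - x) <= B) -> Rabs (l - x) <= B.
Proof. intros Hl Hb. apply Rnot_lt_le. intros Hlt. apply is_lim_seq_spec in Hl.
 destruct (Hl (mkposreal (Rabs (l - x) - B) ltac:(lra))) as [N HN]. simpl in HN.
 specialize (HN (Nat.max N k) (Nat.le_max_l _ _)). specialize (Hb (Nat.max N k) (Nat.le_max_r _ _)).
 assert (Rabs (l - x) <= Rabs (l - u (Nat.max N k)) + Rabs (u (Nat.max N k) - x)).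
 { replace (l - x) with ((l - u (Nat.max N k)) + (u (Nat.max N k) - x)) by ring. apply Rabs_triang. }
 rewrite (Rabs_minus_sym l (u (Nat.max N k))) in H. lra. Qed.

Lemma half_pow_pos k : 0 < (/2) ^ k.
Proof. apply pow_lt; lra. Qed.

Lemma small_pow eps C : 0 < eps -> 0 <= C -> exists k, C * (/2) ^ k < eps.
Proof. intros He HC. destruct (pow_lt_1_zero (/2) ltac:(rewrite Rabs_right; lra) (eps / (C + 1))) as [N HN].
 apply Rdiv_lt_0_compat; lra. exists N. specialize (HN N (le_n N)). rewrite Rabs_right in HN by (apply Rle_ge, pow_le; lra).
 apply Rle_lt_trans with ((C + 1) * (/2)^N). apply Rmult_le_compat_r. apply pow_le; lra. lra.
 apply Rmult_lt_reg_l with (/ (C+1)). apply Rinv_0_lt_compat; lra. rewrite <- Rmult_assoc, Rinv_l, Rmult_1_l by lra.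
 unfold Rdiv in HN. lra. Qed.

Lemma cont_plus (f g : R -> R) t : continuous f t -> continuous g t -> continuous (fun s => f s + g s) t.
Proof. intros; apply (continuous_plus (U:=R_UniformSpace) (K:=R_AbsRing) (V:=R_NormedModule) f g); auto. Qed.
Lemma cont_minus (f g : R -> R) t : continuous f t -> continuous g t -> continuous (fun s => f s - g s) t.
Proof. intros; apply (continuous_minus (U:=R_UniformSpace) (K:=R_AbsRing) (V:=R_NormedModule) f g); auto. Qed.
Lemma cont_mult (f g : R -> R) t : continuous f t -> continuous g t -> continuous (fun s => f s * g s) t.
Proof. intros; apply (continuous_mult (U:=R_UniformSpace) (K:=R_AbsRing) f g); auto. Qed.
Lemma cont_const (c : R) t : continuous (fun _ : R => c) t.
Proof. apply (continuous_const (U:=R_UniformSpace) (V:=R_UniformSpace)). Qed.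

Lemma w_cont C L a x : continuous (fun s => C * exp (2 * L * (s - a))) x.
Proof. apply (ex_derive_continuous (K:=R_AbsRing) (V:=R_NormedModule)). auto_derive. auto. Qed.

Lemma w_cont1 L a x : continuous (fun s => exp (2 * L * (s - a))) x.
Proof. apply (ex_derive_continuous (K:=R_AbsRing) (V:=R_NormedModule)). auto_derive. auto. Qed.

Lemma volterra n a b K f c :
  a < b ->
  (forall i j, inV n i -> inV n j -> pcw a b (fun t => K t i j)) ->
  (forall i, inV n i -> forall t, continuous (fun s => f s i) t) ->
  exists y : R -> nat -> R,
    (forall i, inV n i -> forall t, continuous (fun s => y s i) t) /\
    (forall i, inV n i -> y a i = c i) /\
    (forall t i, a <= t <= b -> inV n i -> is_RInt (Fint n K f y i) a t (y t i - c i)).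
Proof.
intros Hab HK Hf.
set (P := pic n a b K f c).
destruct (fin_max (fun i M => forall j t, inV n j -> a <= t <= b -> Rabs (K t i j) <= M) n) as [MK [HMK0 HMK]].
{ intros i Hi. destruct (fin_max (fun j M => forall t, a <= t <= b -> Rabs (K t i j) <= M) n) as [M [_ HM]].
  + intros j Hj. apply pcw_bound. apply HK; auto.
  + intros j M M' H1 H2 t Ht. specialize (H1 t Ht). lra.
  + exists M. intros j t Hj Ht. apply HM; auto. }
{ intros i M M' H1 H2 j t Hj Ht. specialize (H1 j t Hj Ht). lra. }
destruct (fin_max (fun i M => forall t, a <= t <= b -> Rabs (f t i) <= M) n) as [Mf [HMf0 HMf]].
{ intros i Hi. apply cont_bound. lra. intros; apply Hf; auto. }
{ intros i M M' H1 H2 t Ht. specialize (H1 t Ht). lra. }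
assert (Hcont : forall k i, inV n i -> forall t, continuous (fun s => P k s i) t).
{ induction k; intros i Hi t.
  - apply cont_const.
  - destruct (fin_max (fun j M => forall t, a <= t <= b -> Rabs (P k t j) <= M) n) as [My [HMy0 HMy]].
    + intros j Hj. apply cont_bound; [lra|]. intros; apply IHk; auto.
    + intros j M M' H1 H2 s Hs. specialize (H1 s Hs). lra.
    + set (M := INR n * MK * My + Mf).
      assert (HF : forall s, a <= s <= b -> Rabs (Fint n K f (P k) i s) <= M).
      { intros s Hs. apply Fint_bound; [intros j Hj; apply HMK; auto | intros j Hj; apply HMy; auto | apply HMf; auto | auto]. }
      assert (HM0 : 0 <= M). { specialize (HF a ltac:(lra)). pose proof (Rabs_pos (Fint n K f (P k) i a)). lra. }
      apply (lip_cont _ M). intros s.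
      change (Rabs ((c i + RInt (Fint n K f (P k) i) a (clamp a b s)) - (c i + RInt (Fint n K f (P k) i) a (clamp a b t))) <= M * Rabs (s - t)).
      replace ((c i + RInt (Fint n K f (P k) i) a (clamp a b s)) - (c i + RInt (Fint n K f (P k) i) a (clamp a b t)))
        with (RInt (Fint n K f (P k) i) a (clamp a b s) - RInt (Fint n K f (P k) i) a (clamp a b t)) by ring.
      eapply Rle_trans. apply (int_diff _ a b M); [apply Fint_ok; auto | auto | apply clamp_in; lra | apply clamp_in; lra].
      apply Rmult_le_compat_l; auto. apply clamp_lip; lra. }
assert (Hclamp : forall k t i, P k t i = P k (clamp a b t) i).
{ intros [|k] t i. reflexivity. change (c i + RInt (Fint n K f (P k) i) a (clamp a b t) = c i + RInt (Fint n K f (P k) i) a (clamp a b (clamp a b t))).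
  rewrite (clamp_id a b (clamp a b t)); auto. apply clamp_in; lra. }
assert (Hata : forall k i, P k a i = c i).
{ intros [|k] i. reflexivity. change (c i + RInt (Fint n K f (P k) i) a (clamp a b a) = c i). rewrite clamp_id by lra. rewrite RIntR_point. ring. }
assert (HFok : forall k i, inV n i -> ex_RInt (Fint n K f (P k) i) a b).
{ intros k i Hi. apply Fint_ok; auto. }
assert (HPS : forall k t i, a <= t <= b -> P (S k) t i - c i = RInt (Fint n K f (P k) i) a t).
{ intros k t i Ht. change (c i + RInt (Fint n K f (P k) i) a (clamp a b t) - c i = RInt (Fint n K f (P k) i) a t). rewrite clamp_id by lra. ring. }
destruct (fin_max (fun i M => forall t, a <= t <= b -> Rabs (P 1%nat t i - P O t i) <= M) n) as [D [HD0 HD]].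
{ intros i Hi. apply cont_bound; [lra|]. intros. apply cont_minus; apply Hcont; auto. }
{ intros i M M' H1 H2 t Ht. specialize (H1 t Ht). lra. }
set (L := INR n * MK + 1).
assert (HL : 0 < L). { unfold L. pose proof (pos_INR n). nra. }
set (w := fun s => exp (2 * L * (s - a))).
assert (Hw1 : forall s, a <= s -> 1 <= w s). { intros s Hs. unfold w. pose proof (exp_ineq1_le (2 * L * (s - a))). nra. }
assert (Hstep : forall k i t, inV n i -> a <= t <= b -> Rabs (P (S k) t i - P k t i) <= D * w t * (/2) ^ k).
{ induction k; intros i t Hi Ht.
  - simpl pow. rewrite Rmult_1_r. eapply Rle_trans. apply HD; auto. specialize (Hw1 t ltac:(lra)). nra.
  - assert (HG : forall s, Fint n K f (P (S k)) i s - Fint n K f (P k) i s = sum_to n (fun j => K s i j * (P (S k) s j - P k s j))).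
    { intros s. apply Fint_diff. }
    assert (HexG : ex_RInt (fun s => sum_to n (fun j => K s i j * (P (S k) s j - P k s j))) a t).
    { apply (exR_ext (fun s => Fint n K f (P (S k)) i s - Fint n K f (P k) i s)). intros; apply HG.
      apply exR_minus; apply (exR_sub _ a b); auto; lra. }
    assert (E : P (S (S k)) t i - P (S k) t i = RInt (fun s => sum_to n (fun j => K s i j * (P (S k) s j - P k s j))) a t).
    { replace (P (S (S k)) t i - P (S k) t i) with ((P (S (S k)) t i - c i) - (P (S k) t i - c i)) by ring.
      rewrite !HPS by auto. rewrite <- RIntR_minus. apply RIntR_ext. intros; apply HG.
      apply (exR_sub _ a b); auto; lra. apply (exR_sub _ a b); auto; lra. }
    rewrite E.
    set (X := D * (/2) ^ k).
    assert (HX : 0 <= X). { unfold X. pose proof (half_pow_pos k). nra. }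
    eapply Rle_trans. apply RIntR_abs_le with (h := fun s => (INR n * MK * X) * exp (2 * L * (s - a))).
    + lra.
    + auto.
    + apply exR_cont. intros; apply w_cont.
    + intros s Hs. eapply Rle_trans. apply sum_to_abs.
      apply Rle_trans with (sum_to n (fun _ => MK * (D * w s * (/2)^k))).
      * apply sum_to_le. intros j Hj. rewrite Rabs_mult. apply Rmult_le_compat; auto using Rabs_pos.
        apply HMK; auto; lra. apply IHk; auto; lra.
      * rewrite sum_to_const. unfold X, w. right; ring.
    + rewrite RIntR_scal by (apply exR_cont; intros; apply w_cont1). rewrite exp_int by auto. fold (w t).
      specialize (Hw1 t ltac:(lra)). pose proof (pos_INR n) as Hn.
      set (q := INR n * MK). assert (Hq : 0 <= q) by (unfold q; nra).
      assert (HL' : L = q + 1) by reflexivity.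
      assert (q * X * (w t - 1) <= (q + 1) * (X * w t)) by nra.
      replace (q * X * ((w t - 1) / (2 * L))) with (q * X * (w t - 1) * / (2 * (q + 1))) by (rewrite HL'; field; lra).
      apply Rle_trans with ((q + 1) * (X * w t) * / (2 * (q + 1))).
      apply Rmult_le_compat_r; auto. left; apply Rinv_0_lt_compat; lra.
      right. unfold X. simpl pow. field. lra. }
set (W := w b).
assert (HstepU : forall k i t, inV n i -> Rabs (P (S k) t i - P k t i) <= D * W * (/2) ^ k).
{ intros k i t Hi. rewrite (Hclamp (S k)), (Hclamp k). eapply Rle_trans. apply Hstep; auto. apply clamp_in; lra.
  apply Rmult_le_compat_r. apply pow_le; lra. apply Rmult_le_compat_l; auto. unfold W, w. apply exp_mono.
  pose proof (clamp_in a b t ltac:(lra)). nra. }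
assert (HW : 0 <= W) by (unfold W, w; left; apply exp_pos).
assert (Hcauchy : forall k p i t, inV n i -> Rabs (P (k + p)%nat t i - P k t i) <= 2 * D * W * ((/2) ^ k - (/2) ^ (k + p))).
{ intros k p i t Hi. induction p.
  - rewrite Nat.add_0_r, Rminus_diag, Rabs_R0, Rminus_diag. lra.
  - rewrite Nat.add_succ_r. replace (P (S (k + p)) t i - P k t i) with ((P (S (k + p)) t i - P (k + p)%nat t i) + (P (k + p)%nat t i - P k t i)) by ring.
    eapply Rle_trans. apply Rabs_triang. pose proof (HstepU (k + p)%nat i t Hi). simpl pow. lra. }
assert (Hcauchy' : forall k m i t, inV n i -> (k <= m)%nat -> Rabs (P m t i - P k t i) <= 2 * D * W * (/2) ^ k).
{ intros k m i t Hi Hkm. replace m with (k + (m - k))%nat by lia. eapply Rle_trans. apply Hcauchy; auto.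
  pose proof (half_pow_pos (k + (m - k))). assert (0 <= D * W) by (apply Rmult_le_pos; auto). nra. }
set (y := fun t i => real (Lim_seq (fun k => P k t i))).
assert (Hlim : forall i t, inV n i -> is_lim_seq (fun k => P k t i) (Finite (y t i))).
{ intros i t Hi. assert (Hex : ex_finite_lim_seq (fun k => P k t i)).
  { apply ex_lim_seq_cauchy_corr. intros eps. destruct (small_pow eps (4 * D * W)) as [N HN]. apply cond_pos. nra.
    exists N. intros p m Hp Hm. replace (P p t i - P m t i) with ((P p t i - P N t i) - (P m t i - P N t i)) by ring.
    eapply Rle_lt_trans. apply Rabs_triang. rewrite Rabs_Ropp. pose proof (Hcauchy' N p i t Hi Hp). pose proof (Hcauchy' N m i t Hi Hm). lra. }
  destruct Hex as [l Hl]. unfold y. rewrite (is_lim_seq_unique _ _ Hl). exact Hl. }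
assert (Hyk : forall k i t, inV n i -> Rabs (y t i - P k t i) <= 2 * D * W * (/2) ^ k).
{ intros k i t Hi. apply (lim_bound (fun m => P m t i) _ _ _ k). auto. intros; apply Hcauchy'; auto. }
assert (Hycont : forall i, inV n i -> forall t, continuous (fun s => y s i) t).
{ intros i Hi t. apply cont_iff. intros eps He. destruct (small_pow (eps / 3) (2 * D * W)) as [k Hk]. lra. nra.
  destruct (proj1 (cont_iff _ t) (Hcont k i Hi t) (eps / 3) ltac:(lra)) as [d [Hd Hdd]].
  exists d. split; auto. intros s Hs. specialize (Hdd s Hs).
  replace (y s i - y t i) with ((y s i - P k s i) + (P k s i - P k t i) - (y t i - P k t i)) by ring.
  pose proof (Hyk k i s Hi). pose proof (Hyk k i t Hi).
  eapply Rle_lt_trans. apply Rabs_triang. rewrite Rabs_Ropp. eapply Rle_lt_trans. apply Rplus_le_compat_r. apply Rabs_triang. lra. }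
exists y. split; [auto|]. split.
{ intros i Hi. apply Rminus_diag_uniq. apply (small_zero _ (2 * D * W)). intros k. rewrite <- (Hata k i). apply Hyk; auto. }
intros t i Ht Hi.
assert (HexF : ex_RInt (Fint n K f y i) a t). { apply (exR_sub _ a b); try lra. apply Fint_ok; auto. }
assert (Claim : RInt (Fint n K f y i) a t = y t i - c i).
{ apply Rminus_diag_uniq. apply (small_zero _ ((b - a) * (INR n * MK * (2 * D * W)) + 2 * D * W)). intros k.
  replace (RInt (Fint n K f y i) a t - (y t i - c i)) with ((RInt (Fint n K f y i) a t - RInt (Fint n K f (P k) i) a t) + (P (S k) t i - y t i))
    by (rewrite <- (HPS k t i Ht); ring).
  eapply Rle_trans. apply Rabs_triang.
  rewrite <- RIntR_minus by (auto; apply (exR_sub _ a b); auto; lra).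
  assert (H1 : Rabs (RInt (fun s => Fint n K f y i s - Fint n K f (P k) i s) a t) <= (t - a) * (INR n * MK * (2 * D * W * (/2) ^ k))).
  { apply RIntR_abs_const. lra. apply exR_minus; auto. apply (exR_sub _ a b); auto; lra.
    intros s Hs. rewrite Fint_diff. eapply Rle_trans. apply sum_to_abs.
    apply Rle_trans with (sum_to n (fun _ => MK * (2 * D * W * (/2) ^ k))).
    apply sum_to_le. intros j Hj. rewrite Rabs_mult. apply Rmult_le_compat; auto using Rabs_pos. apply HMK; auto; lra.
    rewrite sum_to_const. right; ring. }
  assert (H2 : Rabs (P (S k) t i - y t i) <= 2 * D * W * (/2) ^ k).
  { rewrite Rabs_minus_sym. eapply Rle_trans. apply Hyk; auto. simpl pow. pose proof (half_pow_pos k). assert (0 <= D * W) by (apply Rmult_le_pos; auto). nra. }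
  pose proof (half_pow_pos k). pose proof (pos_INR n).
  assert ((t - a) * (INR n * MK * (2 * D * W * (/2) ^ k)) <= (b - a) * (INR n * MK * (2 * D * W * (/2) ^ k))).
  { apply Rmult_le_compat_r; [|lra]. repeat apply Rmult_le_pos; lra. }
  nra. }
rewrite <- Claim. apply RIntR_correct. auto.
Qed.

Lemma derR_plus (f g : R -> R) t df dg : is_derive f t df -> is_derive g t dg -> is_derive (fun s => f s + g s) t (df + dg).
Proof. intros; apply (is_derive_plus (K:=R_AbsRing) (V:=R_NormedModule) f g); auto. Qed.
Lemma derR_minus (f g : R -> R) t df dg : is_derive f t df -> is_derive g t dg -> is_derive (fun s => f s - g s) t (df - dg).
Proof. intros; apply (is_derive_minus (K:=R_AbsRing) (V:=R_NormedModule) f g); auto. Qed.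
Lemma derR_mult (f g : R -> R) t df dg : is_derive f t df -> is_derive g t dg -> is_derive (fun s => f s * g s) t (df * g t + f t * dg).
Proof. intros; apply (is_derive_mult (K:=R_AbsRing) f g); auto. intros; apply Rmult_comm. Qed.
Lemma derR_ext (f g : R -> R) t l : (forall s, f s = g s) -> is_derive f t l -> is_derive g t l.
Proof. intros; apply (is_derive_ext (K:=R_AbsRing) (V:=R_NormedModule) f g); auto. Qed.
Lemma derR_const (c : R) t : is_derive (fun _ => c) t 0.
Proof. auto_derive; auto. Qed.
Lemma derR_shift (f : R -> R) c t l : is_derive (fun s => f s - c) t l -> is_derive f t l.
Proof. intros H. apply (derR_ext (fun s => (f s - c) + c)). intros; ring.
 replace l with (l + 0) by ring. apply derR_plus; auto. apply derR_const. Qed.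
Lemma derR_RInt (F I : R -> R) a t : (exists d, 0 < d /\ forall s, Rabs (s - t) < d -> is_RInt F a s (I s)) -> continuous F t -> is_derive I t (F t).
Proof. intros H Hc. apply (is_derive_RInt (V:=R_NormedModule) F I a t); auto. apply locallyR. auto. Qed.
Lemma derR_RInt' (F I : R -> R) b t : (exists d, 0 < d /\ forall s, Rabs (s - t) < d -> is_RInt F s b (I s)) -> continuous F t -> is_derive I t (- F t).
Proof. intros H Hc. apply (is_derive_RInt' (V:=R_NormedModule) F I t b); auto. apply locallyR. auto. Qed.
Lemma derR_unique (f : R -> R) t l1 l2 : is_derive f t l1 -> is_derive f t l2 -> l1 = l2.
Proof. intros H1 H2. apply is_derive_unique in H1. apply is_derive_unique in H2. congruence. Qed.

Lemma zero_deriv (h : R -> R) (L : list R) : forall a b, a <= b ->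
  (forall t, a <= t <= b -> continuous h t) -> (forall t, a < t < b -> ~ In t L -> is_derive h t 0) -> h a = h b.
Proof. induction L as [|p L IH]; intros a b Hab Hc Hd.
 - destruct (MVT_gen h a b (fun _ => 0)) as [c [_ Hc']].
   + rewrite Rmin_left, Rmax_right by lra. intros x Hx. apply Hd; auto.
   + rewrite Rmin_left, Rmax_right by lra. intros x Hx. apply continuity_pt_filterlim. apply Hc; auto.
   + lra.
 - destruct (Rlt_dec a p) as [H1|H1]; [destruct (Rlt_dec p b) as [H2|H2]|].
   + transitivity (h p).
     * apply IH; [lra| intros; apply Hc; lra |]. intros t Ht HL. apply Hd. lra. intros [E|E]; [lra|auto].
     * apply IH; [lra| intros; apply Hc; lra |]. intros t Ht HL. apply Hd. lra. intros [E|E]; [lra|auto].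
   + apply IH; auto. intros t Ht HL. apply Hd; auto. intros [E|E]; [lra|auto].
   + apply IH; auto. intros t Ht HL. apply Hd; auto. intros [E|E]; [lra|auto]. Qed.

Lemma fin_list (P : nat -> R -> Prop) n : (forall k, (1 <= k <= n)%nat -> exists L : list R, forall t, ~ In t L -> P k t) ->
  exists L : list R, forall k t, (1 <= k <= n)%nat -> ~ In t L -> P k t.
Proof. induction n; intros H. exists []; intros; lia.
 destruct IHn as [L1 H1]. intros; apply H; lia. destruct (H (S n)) as [L2 H2]; [lia|].
 exists (L1 ++ L2). intros k t Hk Ht. destruct (Nat.eq_dec k (S n)). subst; apply H2. intros Hin; apply Ht, in_or_app; auto.
 apply H1. lia. intros Hin; apply Ht, in_or_app; auto. Qed.

Lemma pcw_list n a b (A : R -> nat -> nat -> R) : (forall i j, inV n i -> inV n j -> pcw a b (fun t => A t i j)) ->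
  exists L : list R, forall i j t, inV n i -> inV n j -> a < t < b -> ~ In t L -> continuous (fun s => A s i j) t.
Proof. intros H.
 destruct (fin_list (fun i t => forall j, inV n j -> a < t < b -> continuous (fun s => A s i j) t) n) as [L HL].
 - intros i Hi. destruct (fin_list (fun j t => a < t < b -> continuous (fun s => A s i j) t) n) as [L HL].
   + intros j Hj. destruct (pcw_cont a b (fun s => A s i j)) as [L HL]. apply H; auto. exists L. intros t Ht Ht'. apply HL; auto.
   + exists L. intros t Ht j Hj Hab. apply HL; auto.
 - exists L. intros i j t Hi Hj Ht HnL. apply HL; auto. Qed.

Lemma cont_Fint n K f y i t : (forall j, inV n j -> continuous (fun s => K s i j) t) -> (forall j, inV n j -> continuous (fun s => y s j) t) ->
  continuous (fun s => f s i) t -> continuous (Fint n K f y i) t.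
Proof. intros HK Hy Hf. unfold Fint. apply cont_plus; auto. apply (continuous_sum_to n (fun j s => K s i j * y s j)).
 intros j Hj. apply cont_mult; auto. Qed.

Lemma is_RInt_reflect (F : R -> R) a b t l : is_RInt F a (a + b - t) l -> is_RInt (fun y => F (a + b - y)) t b l.
Proof. intros H.
 assert (H1 := is_RInt_swap (V:=R_NormedModule) F (a + b - t) a l H).
 assert (H2 := is_RInt_comp_lin (V:=R_NormedModule) F (-1) (a + b) t b (opp l)).
 replace (-1 * t + (a + b)) with (a + b - t) in H2 by ring. replace (-1 * b + (a + b)) with a in H2 by ring.
 specialize (H2 H1). apply (is_RInt_opp (V:=R_NormedModule)) in H2.
 replace l with (opp (opp l)) by (unfold opp; simpl; ring).
 eapply (is_RInt_ext (V:=R_NormedModule)); [|exact H2]. intros x _. simpl. unfold opp, scal; simpl. unfold mult; simpl.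
 replace (-1 * x + (a + b)) with (a + b - x) by ring. ring. Qed.

Lemma adjoint n a b (A : R -> nat -> nat -> R) (eta : nat -> R) : a < b ->
  (forall i j, inV n i -> inV n j -> pcw a b (fun t => A t i j)) ->
  exists lam : R -> nat -> R,
    (forall j, inV n j -> forall t, continuous (fun s => lam s j) t) /\
    (forall j, inV n j -> lam b j = eta j) /\
    (forall t j, a <= t <= b -> inV n j -> is_RInt (fun r => sum_to n (fun i => A r i j * lam r i)) t b (lam t j - eta j)).
Proof. intros Hab HA.
 destruct (volterra n a b (fun s j i => A (a + b - s) i j) (fun _ _ => 0) eta Hab) as [mu [Hc [Ha He]]].
 - intros j i Hj Hi. apply (pcw_reflect a b (fun t => A t i j)). auto.
 - intros; apply cont_const.
 - exists (fun t j => mu (a + b - t) j). split; [|split].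
   + intros j Hj t. apply (continuous_comp (U:=R_UniformSpace) (V:=R_UniformSpace) (W:=R_UniformSpace) (fun t => a + b - t) (fun s => mu s j)).
     apply (lip_cont _ 1). intros s. replace (a + b - s - (a + b - t)) with (- (s - t)) by ring. rewrite Rabs_Ropp; lra.
     apply Hc; auto.
   + intros j Hj. simpl. replace (a + b - b) with a by ring. auto.
   + intros t j Ht Hj. specialize (He (a + b - t) j ltac:(lra) Hj).
     apply (is_RInt_ext (V:=R_NormedModule) (fun y => Fint n (fun s j i => A (a + b - s) i j) (fun _ _ => 0) mu j (a + b - y))).
     * intros x _. unfold Fint. replace (a + b - (a + b - x)) with x by ring. rewrite Rplus_0_r. reflexivity.
     * apply (is_RInt_reflect (Fint n (fun s j i => A (a + b - s) i j) (fun _ _ => 0) mu j) a b t). auto. Qed.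

Lemma sum_to_scal_r n c f : sum_to n (fun k => f k * c) = sum_to n f * c.
Proof. induction n; simpl; [lra|]. rewrite IHn; lra. Qed.

Lemma near_int a b t : a < t < b -> exists d, 0 < d /\ forall s, Rabs (s - t) < d -> a < s < b.
Proof. intros Ht. exists (Rmin (t - a) (b - t)). split. apply Rmin_pos; lra. intros s Hs.
 assert (Rabs (s - t) < t - a) by (eapply Rlt_le_trans; [apply Hs|apply Rmin_l]).
 assert (Rabs (s - t) < b - t) by (eapply Rlt_le_trans; [apply Hs|apply Rmin_r]).
 unfold Rabs in *; destruct Rcase_abs; lra. Qed.

Lemma duality n a b (A : R -> nat -> nat -> R) (f x lam : R -> nat -> R) :
 a < b ->
 (forall i j, inV n i -> inV n j -> pcw a b (fun t => A t i j)) ->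
 (forall i, inV n i -> forall t, continuous (fun s => f s i) t) ->
 (forall i, inV n i -> forall t, continuous (fun s => x s i) t) ->
 (forall i, inV n i -> forall t, continuous (fun s => lam s i) t) ->
 (forall t i, a <= t <= b -> inV n i -> is_RInt (Fint n A f x i) a t (x t i - x a i)) ->
 (forall t j, a <= t <= b -> inV n j -> is_RInt (fun r => sum_to n (fun i => A r i j * lam r i)) t b (lam t j - lam b j)) ->
 sum_to n (fun i => lam b i * x b i) - sum_to n (fun i => lam a i * x a i) = RInt (fun s => sum_to n (fun i => lam s i * f s i)) a b.
Proof. intros Hab HA Hf Hx Hl Hxe Hle.
 set (g := fun s => sum_to n (fun i => lam s i * f s i)).
 assert (Hg : forall t, continuous g t). { intros t. apply (continuous_sum_to n (fun i s => lam s i * f s i)). intros; apply cont_mult; auto. }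
 assert (HgD : forall t, is_derive (fun s => RInt g a s) t (g t)).
 { intros t. apply (derR_RInt _ _ a). exists 1. split; [lra|]. intros s _. apply RIntR_correct. apply exR_cont. intros; auto. auto. }
 set (h := fun t => sum_to n (fun i => lam t i * x t i) - RInt g a t).
 destruct (pcw_list n a b A HA) as [L HL].
 assert (E : h a = h b).
 { apply (zero_deriv h L a b). lra.
   - intros t _. apply cont_minus. apply (continuous_sum_to n (fun i s => lam s i * x s i)). intros; apply cont_mult; auto.
     apply (ex_derive_continuous (K:=R_AbsRing) (V:=R_NormedModule)). eexists. apply HgD.
   - intros t Ht HtL. destruct (near_int a b t Ht) as [d [Hd Hdd]].
     set (G := fun j r => sum_to n (fun i => A r i j * lam r i)).
     assert (HxD : forall i, inV n i -> is_derive (fun s => x s i) t (Fint n A f x i t)).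
     { intros i Hi. apply (derR_shift _ (x a i)). apply (derR_RInt _ _ a). exists d. split; auto. intros s Hs. apply Hxe; auto. specialize (Hdd s Hs). lra.
       apply cont_Fint; auto; intros j Hj; apply HL; auto. }
     assert (HlD : forall j, inV n j -> is_derive (fun s => lam s j) t (- G j t)).
     { intros j Hj. apply (derR_shift _ (lam b j)). apply (derR_RInt' _ _ b). exists d. split; auto. intros s Hs. apply Hle; auto. specialize (Hdd s Hs). lra.
       apply (continuous_sum_to n (fun i r => A r i j * lam r i)). intros i Hi. apply cont_mult; auto; apply HL; auto. }
     assert (HhD : is_derive h t (sum_to n (fun i => - G i t * x t i + lam t i * Fint n A f x i t) - g t)).
     { apply derR_minus; auto. apply (is_derive_sum_to n (fun i s => lam s i * x s i) (fun i s => - G i s * x s i + lam s i * Fint n A f x i s)).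
       intros i Hi. apply derR_mult; auto. }
     replace 0 with (sum_to n (fun i => - G i t * x t i + lam t i * Fint n A f x i t) - g t). auto.
     rewrite (sum_to_ext n _ (fun i => (-1) * sum_to n (fun j => A t j i * lam t j * x t i) + (sum_to n (fun j => A t i j * lam t i * x t j) + lam t i * f t i))).
     rewrite sum_to_plus, sum_to_plus, sum_to_scal, sum_to_swap. unfold g. ring.
     intros i Hi. unfold G, Fint. rewrite (sum_to_scal_r n (x t i) (fun j => A t j i * lam t j)).
     rewrite (sum_to_ext n (fun j => A t i j * lam t i * x t j) (fun j => lam t i * (A t i j * x t j))) by (intros; ring).
     rewrite sum_to_scal. ring. }
 unfold h in E. rewrite RIntR_point in E. fold g. lra. Qed.

Definition sumlist (a b : nat -> R) (l : list nat) : R := fold_right (fun k s => (b k - a k) + s) 0 l.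

Lemma sumlist_nonneg a b l : (forall k, a k <= b k) -> 0 <= sumlist a b l.
Proof. intros H. induction l; simpl; [lra|]. specialize (H a0). lra. Qed.

Lemma sumlist_remove_le a b k l : (forall k, a k <= b k) -> sumlist a b (remove Nat.eq_dec k l) <= sumlist a b l.
Proof. intros H. induction l; simpl; [lra|]. destruct (Nat.eq_dec k a0); simpl; specialize (H a0); lra. Qed.

Lemma sumlist_remove a b k l : (forall k, a k <= b k) -> In k l -> (b k - a k) + sumlist a b (remove Nat.eq_dec k l) <= sumlist a b l.
Proof. intros H. induction l; simpl; intros Hin; [tauto|]. destruct (Nat.eq_dec k a0).
 - subst. pose proof (sumlist_remove_le a b a0 l H). lra.
 - simpl. destruct Hin as [E|Hin]; [congruence|]. specialize (IHl Hin). lra. Qed.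

Lemma sumlist_app a b l1 l2 : sumlist a b (l1 ++ l2) = sumlist a b l1 + sumlist a b l2.
Proof. induction l1; simpl; [lra|]. rewrite IHl1; lra. Qed.

Lemma psum_sumlist a b K : psum K (fun k => b k - a k) = sumlist a b (seq 0 K).
Proof. induction K. simpl; lra. rewrite seq_S, sumlist_app, <- IHK. simpl. lra. Qed.

Lemma Lfin a b : (forall k, a k <= b k) -> forall m l, (length l <= m)%nat -> forall c x, c <= x ->
  (forall t, c <= t <= x -> exists k, In k l /\ a k < t < b k) -> x - c <= sumlist a b l.
Proof. intros Hab. induction m; intros l Hl c x Hcx Hcov.
 - destruct l; [|simpl in Hl; lia]. destruct (Hcov c) as [k [[] _]]. lra.
 - destruct (Hcov c) as [k0 [Hk0 Hc0]]. lra.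
   pose proof (sumlist_remove a b k0 l Hab Hk0).
   pose proof (sumlist_nonneg a b (remove Nat.eq_dec k0 l) Hab).
   destruct (Rlt_dec x (b k0)). lra.
   assert (x - b k0 <= sumlist a b (remove Nat.eq_dec k0 l)).
   { apply IHm. pose proof (remove_length_lt Nat.eq_dec l k0 Hk0). lia. lra.
     intros t Ht. destruct (Hcov t) as [k [Hk Hkt]]. lra. exists k. split; auto.
     apply in_in_remove; auto. intros E; subst; lra. }
   lra. Qed.

Lemma Lcover (a b : nat -> R) c d : c < d -> (forall t, c <= t <= d -> exists k, a k < t < b k) ->
  exists K, forall t, c <= t <= d -> exists k, (k < K)%nat /\ a k < t < b k.
Proof. intros Hcd Hcov.
 set (E := fun x => c <= x <= d /\ exists K, forall t, c <= t <= x -> exists k, (k < K)%nat /\ a k < t < b k).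
 assert (Ec : E c). { split; [lra|]. destruct (Hcov c) as [k0 Hk0]. lra. exists (S k0). intros t Ht. exists k0. split; [lia|]. replace t with c by lra. auto. }
 destruct (completeness E) as [s [Hub Hlub]].
 { exists d. intros x [Hx _]. lra. }
 { exists c; auto. }
 assert (Hcs : c <= s) by (apply Hub; auto).
 assert (Hsd : s <= d) by (apply Hlub; intros x [Hx _]; lra).
 destruct (Hcov s) as [k1 Hk1]. lra.
 destruct (classic (exists x, E x /\ a k1 < x)) as [[x [[Hx [K HK]] Hax]]|Hno].
 2: { exfalso. assert (s <= a k1). { apply Hlub. intros x Ex. apply Rnot_lt_le. intros Hlt. apply Hno. exists x; auto. } lra. }
 assert (Hy : forall y, s < y -> y <= d -> y < b k1 -> E y).
 { intros y Hsy Hyd Hyb. split; [lra|]. exists (Nat.max K (S k1)). intros t Ht.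
   destruct (Rle_dec t x). destruct (HK t) as [k [Hk Hkt]]. lra. exists k; split; auto; lia.
   exists k1. split; [lia|]. lra. }
 destruct (Rle_dec d ((s + b k1) / 2)).
 - assert (Ed : E d). { destruct (Req_dec s d). subst s. split; [lra|]. exists (Nat.max K (S k1)). intros t Ht.
     destruct (Rle_dec t x). destruct (HK t) as [k [Hk Hkt]]. lra. exists k; split; auto; lia.
     exists k1. split; [lia|]. lra. apply Hy; lra. }
   destruct Ed as [_ [K' HK']]. exists K'. intros t Ht. apply HK'. lra.
 - exfalso. assert (E ((s + b k1) / 2)) by (apply Hy; lra). apply Hub in H. lra. Qed.

Lemma null_no_interval N c d : lebesgue_null N -> c < d -> ~ (forall t, c <= t <= d -> N t).
Proof. intros HN Hcd Hall. destruct (HN ((d - c) / 2) ltac:(lra)) as [a [b [Hab [Hcov Hsum]]]].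
 destruct (Lcover a b c d Hcd) as [K HK]. intros t Ht. apply Hcov. apply Hall; auto.
 assert (d - c <= sumlist a b (seq 0 K)).
 { apply (Lfin a b Hab (length (seq 0 K))); auto. lra. intros t Ht. destruct (HK t Ht) as [k [Hk Hkt]]. exists k. split; auto. apply in_seq. lia. }
 rewrite <- psum_sumlist in H. specialize (Hsum K). lra. Qed.

Lemma avoid_list (L : list R) : forall c d, c < d -> exists c' d', c < c' /\ c' < d' /\ d' < d /\ forall t, c' <= t <= d' -> ~ In t L.
Proof. induction L as [|p L IH]; intros c d Hcd.
 - exists (c + (d - c) / 3), (c + 2 * (d - c) / 3). repeat split; try lra. intros t _ [].
 - set (m := (c + d) / 2). destruct (Rle_dec p m).
   + destruct (IH m d ltac:(unfold m; lra)) as [c' [d' [H1 [H2 [H3 H4]]]]]. exists c', d'. repeat split; try (unfold m in *; lra).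
     intros t Ht [E|E]. lra. apply (H4 t Ht E).
   + destruct (IH c m ltac:(unfold m; lra)) as [c' [d' [H1 [H2 [H3 H4]]]]]. exists c', d'. repeat split; try (unfold m in *; lra).
     intros t Ht [E|E]. lra. apply (H4 t Ht E). Qed.

Lemma cont_zero_ae (v : R -> R) a b N L : a < b -> lebesgue_null N -> (forall t, continuous v t) ->
  (forall r, a < r < b -> ~ In r L -> ~ N r -> v r = 0) -> forall t, a <= t <= b -> v t = 0.
Proof. intros Hab HN Hv H t Ht. apply NNPP. intros Hne.
 assert (Hpos : 0 < Rabs (v t)) by (apply Rabs_pos_lt; auto).
 destruct (proj1 (cont_iff v t) (Hv t) (Rabs (v t)) Hpos) as [dl [Hdl Hd]].
 set (c := Rmax a (t - dl / 2)). set (d := Rmin b (t + dl / 2)).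
 assert (Hcd : c < d). { unfold c, d, Rmax, Rmin. repeat destruct Rle_dec; lra. }
 destruct (avoid_list L c d Hcd) as [c' [d' [H1 [H2 [H3 H4]]]]].
 apply (null_no_interval N c' d' HN H2). intros r Hr. apply NNPP. intros HNr.
 assert (Hc1 : a <= c /\ t - dl / 2 <= c) by (unfold c, Rmax; destruct Rle_dec; lra).
 assert (Hd1 : d <= b /\ d <= t + dl / 2) by (unfold d, Rmin; destruct Rle_dec; lra).
 assert (Hr0 : v r = 0). { apply H; [lra | apply H4; auto | auto]. }
 assert (Rabs (r - t) < dl) by (unfold Rabs; destruct Rcase_abs; lra).
 specialize (Hd r H0). rewrite Hr0 in Hd. rewrite Rminus_0_l, Rabs_Ropp in Hd. lra. Qed.

Lemma nodup_disj {A : Type} (l1 l2 : list A) x : NoDup (l1 ++ l2) -> In x l1 -> In x l2 -> False.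
Proof. intros H H1 H2. apply in_split in H2. destruct H2 as [u [w E]]. subst.
 rewrite app_assoc in H. apply NoDup_remove_2 in H. apply H. apply in_or_app. left; apply in_or_app; auto. Qed.

Lemma concat_same (C : list (list nat)) c c' x : NoDup (concat C) -> In c C -> In c' C -> In x c -> In x c' -> c = c'.
Proof. induction C as [|c0 C IH]; simpl; intros Hnd Hc Hc' Hx Hx'; [tauto|].
 destruct Hc as [E|Hc]; destruct Hc' as [E'|Hc']; subst; auto.
 - exfalso. apply (nodup_disj c (concat C) x Hnd Hx). apply in_concat. eauto.
 - exfalso. apply (nodup_disj c' (concat C) x Hnd Hx'). apply in_concat. eauto.
 - apply IH; auto. eapply NoDup_app_remove_l; eauto. Qed.

Lemma concat_nodup_in (C : list (list nat)) c : NoDup (concat C) -> In c C -> NoDup c.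
Proof. induction C as [|c0 C IH]; simpl; intros Hnd Hc; [tauto|]. destruct Hc as [E|Hc].
 subst. eapply NoDup_app_remove_r; eauto. apply IH; auto. eapply NoDup_app_remove_l; eauto. Qed.

Lemma pos_unique n C c c' i j : chains_ok n C -> In c C -> In c' C -> (i < length c)%nat -> (j < length c')%nat ->
  nth i c 0%nat = nth j c' 0%nat -> c = c' /\ i = j.
Proof. intros [_ [Hnd _]] Hc Hc' Hi Hj E.
 assert (c = c'). { apply (concat_same C c c' (nth i c 0%nat)); auto. apply nth_In; auto. rewrite E. apply nth_In; auto. }
 subst. split; auto. apply (NoDup_nth c' 0%nat); auto. eapply concat_nodup_in; eauto. Qed.

Lemma pos_exists n C v : chains_ok n C -> inV n v -> exists c i, In c C /\ (i < length c)%nat /\ nth i c 0%nat = v.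
Proof. intros [_ [_ Hv]] H. apply Hv in H. apply in_concat in H. destruct H as [c [Hc Hvc]].
 destruct (In_nth c v 0%nat Hvc) as [i [Hi E]]. exists c, i. auto. Qed.

Lemma chain_edge_inV n C u v : chains_ok n C -> chain_edge C u v -> inV n u /\ inV n v.
Proof. intros [H1 [H2 H3]] [c [Hc [i [Hi [Eu Ev]]]]]. split; apply H3; apply in_concat; exists c; split; auto; subst.
 apply nth_In; lia. apply nth_In; lia. Qed.

Lemma source_or_edge n C v : chains_ok n C -> inV n v -> is_source C v \/ exists p, chain_edge C p v.
Proof. intros Hok Hv. destruct (pos_exists n C v Hok Hv) as [c [i [Hc [Hi E]]]]. destruct i.
 - left. exists c. split; auto. destruct c; simpl in *; [lia|]. congruence.
 - right. exists (nth i c 0%nat). exists c. split; auto. exists i. auto. Qed.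

Lemma edge_func n C p v w : chains_ok n C -> chain_edge C p v -> chain_edge C p w -> v = w.
Proof. intros Hok [c [Hc [i [Hi [Ep Ev]]]]] [c' [Hc' [j [Hj [Ep' Ew]]]]].
 assert (H : c = c' /\ i = j) by (apply (pos_unique n C c c' i j); auto; try lia; congruence).
 destruct H; subst; congruence. Qed.

Lemma edge_neq n C p v : chains_ok n C -> chain_edge C p v -> p <> v.
Proof. intros Hok [c [Hc [i [Hi [Ep Ev]]]]] E. subst.
 assert (H : c = c /\ i = S i) by (apply (pos_unique n C c c i (S i)); auto; try lia; congruence). lia. Qed.

Lemma source_not_target n C s p : chains_ok n C -> is_source C s -> chain_edge C p s -> False.
Proof. intros Hok [c [Hc Hh]] [c' [Hc' [i [Hi [Ep Ev]]]]]. destruct c as [|x c]; simpl in Hh; [congruence|]. injection Hh as E. subst x.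
 assert (H : s :: c = c' /\ 0%nat = S i) by (apply (pos_unique n C (s :: c) c' 0 (S i)); simpl; auto; lia). lia. Qed.

Lemma succ_chain_none c p : ~ In p c -> succ_chain c p = None.
Proof. induction c as [|x c IH]; intros H; simpl; auto. destruct c as [|y c']; auto.
 destruct (Nat.eqb_spec x p). subst; exfalso; apply H; simpl; auto. apply IH. intros Hin; apply H; simpl; auto. Qed.

Lemma succ_chain_cons x y r v : succ_chain (x :: y :: r) v = if Nat.eqb x v then Some y else succ_chain (y :: r) v.
Proof. reflexivity. Qed.

Lemma succ_chain_nth c i : NoDup c -> (S i < length c)%nat -> succ_chain c (nth i c 0%nat) = Some (nth (S i) c 0%nat).
Proof. revert i. induction c as [|x c IH]; intros i Hnd Hi; simpl in Hi; [lia|]. destruct c as [|y c']; simpl in Hi; [lia|].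
 destruct i.
 - simpl. rewrite Nat.eqb_refl. auto.
 - change (succ_chain (x :: y :: c') (nth i (y :: c') 0%nat) = Some (nth (S i) (y :: c') 0%nat)).
   rewrite succ_chain_cons. inversion Hnd; subst.
   destruct (Nat.eqb_spec x (nth i (y :: c') 0%nat)).
   + exfalso. apply H1. rewrite e. apply nth_In. simpl; lia.
   + apply IH; auto. simpl; lia. Qed.

Lemma succ_edge' C p v : NoDup (concat C) -> chain_edge C p v -> succ C p = Some v.
Proof. intros Hnd He. destruct He as [c [Hc [i [Hi [Ep Ev]]]]].
 induction C as [|c0 C IH]; simpl in *; [tauto|].
 destruct Hc as [E|Hc].
 - subst. rewrite succ_chain_nth; auto. eapply NoDup_app_remove_r; eauto.
 - assert (Hn : ~ In p c0).
   { intros Hin. apply (nodup_disj c0 (concat C) p Hnd Hin). apply in_concat. exists c. split; auto. subst. apply nth_In; lia. }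
   rewrite succ_chain_none; auto. apply IH; auto. eapply NoDup_app_remove_l; eauto. Qed.

Lemma succ_edge n C p v : chains_ok n C -> chain_edge C p v -> succ C p = Some v.
Proof. intros [_ [Hnd _]] He. apply succ_edge'; auto. Qed.

Lemma zero_of_int (G : R -> R) a b r : a < r < b -> continuous G r -> (forall t, a <= t <= b -> is_RInt G t b 0) -> G r = 0.
Proof. intros Hr Hc H. destruct (near_int a b r Hr) as [d [Hd Hdd]].
 assert (H1 : is_derive (fun _ => 0) r (- G r)).
 { apply (derR_RInt' G (fun _ => 0) b r); auto. exists d. split; auto. intros s Hs. apply H. specialize (Hdd s Hs). lra. }
 pose proof (derR_unique _ _ _ _ H1 (derR_const 0 r)). lra. Qed.

Lemma structural n C T a b (A : R -> nat -> nat -> R) N (lam : R -> nat -> R) :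
  chains_ok n C -> time_function n C T -> a < b ->
  lebesgue_null N -> (forall t, ~ N t -> in_P n C T (A t)) ->
  (forall i j, inV n i -> inV n j -> pcw a b (fun t => A t i j)) ->
  (forall j, inV n j -> forall t, continuous (fun s => lam s j) t) ->
  (forall t j, a <= t <= b -> inV n j -> is_RInt (fun r => sum_to n (fun i => A r i j * lam r i)) t b (lam t j - lam b j)) ->
  (forall s, is_source C s -> forall t, a <= t <= b -> lam t s = 0) ->
  forall v, inV n v -> forall t, a <= t <= b -> lam t v = 0.
Proof. intros Hok [Tf1 [Tf2 [Tf3 Tf4]]] Hab HN HP HA Hl Hle Hsrc.
 destruct (pcw_list n a b A HA) as [L HL].
 assert (Main : forall tau v, inV n v -> (T v <= tau)%nat -> forall t, a <= t <= b -> lam t v = 0).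
 { induction tau; intros v Hv HTv.
   - specialize (Tf1 v Hv). lia.
   - destruct (Nat.le_gt_cases (T v) tau) as [Hle'|Hgt]. apply IHtau; auto.
     assert (HTv' : T v = S tau) by lia. clear HTv Hgt.
     destruct (source_or_edge n C v Hok Hv) as [Hs|[p Hp]]. apply Hsrc; auto.
     assert (Hpv := Tf4 p v Hp). destruct (chain_edge_inV n C p v Hok Hp) as [HpV _].
     assert (Hlp : forall t, a <= t <= b -> lam t p = 0) by (apply IHtau; auto; lia).
     assert (Hvns : ~ is_source C v) by (intros Hs; apply (source_not_target n C v p Hok Hs Hp)).
     assert (Hpnv : p <> v) by (apply (edge_neq n C); auto).
     assert (Hsucc : succ C p = Some v) by (apply (succ_edge n C); auto).
     set (G := fun r => sum_to n (fun i => A r i p * lam r i)).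
     assert (HG0 : forall r, a < r < b -> ~ In r L -> G r = 0).
     { intros r Hr HrL. apply (zero_of_int G a b r Hr).
       - apply (continuous_sum_to n (fun i r => A r i p * lam r i)). intros i Hi. apply cont_mult; [apply HL; auto|apply Hl; auto].
       - intros t Ht. specialize (Hle t p Ht HpV). rewrite (Hlp t Ht), (Hlp b ltac:(lra)) in Hle. replace (0 - 0) with 0 in Hle by ring. exact Hle. }
     apply (cont_zero_ae (fun s => lam s v) a b N L); auto.
     intros r Hr HrL HrN. destruct (HP r HrN) as [E [[HE1 [HE2 HE3]] HQ]].
     assert (HGv : G r = A r v p * lam r v).
     { apply (sum_to_single n (fun i => A r i p * lam r i) v Hv). intros i Hi Hiv.
       destruct (Nat.eq_dec i p) as [->|Hip]. rewrite Hlp by lra. ring.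
       destruct (Nat.le_gt_cases (T i) tau) as [Hti|Hti]. rewrite (IHtau i Hi Hti r) by lra. ring.
       assert (His : ~ is_source C i). { intros Hs. rewrite (Tf2 i Hs) in Hti. assert (T p < T v)%nat by auto. specialize (Tf1 p HpV). lia. }
       assert (T i <> T v) by (apply Tf3; auto).
       assert (HnE : ~ E p i).
       { apply HE3; auto. intros He. apply Hiv. apply (edge_func n C p i v Hok He Hp).
         unfold Tmax. rewrite Hsucc. lia. }
       assert (A r i p = 0). { apply NNPP. intros Hne. apply HnE. apply (proj1 (HQ i p Hi HpV Hip)). auto. }
       rewrite H0. ring. }
     assert (HAv : A r v p <> 0). { apply (proj2 (HQ v p Hv HpV (not_eq_sym Hpnv))). apply HE2; auto. }
     rewrite (HG0 r Hr HrL) in HGv. symmetry in HGv. apply Rmult_integral in HGv. destruct HGv; [contradiction|auto]. }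
 intros v Hv t Ht. apply (Main (T v)); auto. Qed.

Module LA.
Import all_boot all_algebra Rstruct.
Import GRing.Theory.
Local Open Scope ring_scope.

Lemma sum_to_big n (f : nat -> R) : sum_to n f = \sum_(k < n) f k.+1.
Proof. elim: n => [|n IH]; first by rewrite big_ord0. by rewrite big_ord_recr /= IH. Qed.

Lemma linalg n (M : nat -> nat -> R) :
 (forall eta : nat -> R, (forall i, inV n i -> sum_to n (fun j => Rmult (M i j) (eta j)) = R0) -> forall j, inV n j -> eta j = R0) ->
 forall z : nat -> R, exists eta : nat -> R, forall i, inV n i -> sum_to n (fun j => Rmult (M i j) (eta j)) = z i.
Proof.
move=> Hinj z.
pose A : 'M[R]_n := \matrix_(i < n, j < n) M i.+1 j.+1.
have HA : A \in unitmx.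
  rewrite unitmxE unitfE -det_tr. apply/negP => /det0P [v Hv0 Hv].
  pose eta := fun j : nat => \sum_(k < n | k.+1 == j) v 0 k.
  have Eeta : forall k0 : 'I_n, eta k0.+1 = v 0 k0.
    move=> k0. rewrite /eta (eq_bigl (pred1 k0)) ?big_pred1_eq // => k.
  have Heta : forall j, inV n j -> eta j = 0.
    apply: Hinj => i [Hi1 Hi2]. rewrite sum_to_big.
    have Hlt : (i.-1 < n)%N by apply/ltP; destruct i; simpl; lia.
    have Ei : i = (Ordinal Hlt).+1 by case: i Hi1 Hi2 Hlt => [|i'] Hi1 Hi2 Hlt; [lia| by []].
    rewrite Ei. have := congr1 (fun m : 'rV_n => m 0 (Ordinal Hlt)) Hv. rewrite !mxE => E.
    transitivity (\sum_j v 0 j * A^T j (Ordinal Hlt)); last by rewrite E.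
    apply: eq_bigr => j _. by rewrite Eeta !mxE RmultE mulrC.
  apply/negP: Hv0. rewrite negbK. apply/eqP/rowP => j. rewrite mxE.
  have := Heta j.+1 (conj (le_n_S _ _ (Nat.le_0_l j)) (elimT leP (ltn_ord j))). by rewrite Eeta.
pose zc : 'cV[R]_n := \col_(i < n) z i.+1.
pose w := invmx A *m zc.
exists (fun j : nat => \sum_(k < n | k.+1 == j) w k 0).
have Ew : forall k0 : 'I_n, (\sum_(k < n | k.+1 == k0.+1) w k 0) = w k0 0.
  move=> k0. rewrite (eq_bigl (pred1 k0)) ?big_pred1_eq // => k.
move=> i [Hi1 Hi2]. rewrite sum_to_big.
have Hlt : (i.-1 < n)%N by apply/ltP; destruct i; simpl; lia.
have Ei : i = (Ordinal Hlt).+1 by case: i Hi1 Hi2 Hlt => [|i'] Hi1 Hi2 Hlt; [lia| by []].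
have := congr1 (fun m : 'cV_n => m (Ordinal Hlt) 0) (mulKVmx HA zc). rewrite !mxE => E.
rewrite Ei -E. apply: eq_bigr => j _. rewrite Ew. have -> : A (Ordinal Hlt) j = M (Ordinal Hlt).+1 j.+1 by rewrite mxE. by [].
Qed.
End LA.
Definition linalg := LA.linalg.


Lemma cont_pc (f : R -> R) : (forall t, continuous f t) -> piecewise_continuous f.
Proof. intros Hf a b Hab. exists 1%nat, (fun k => match k with O => a | _ => b end).
 split; [reflexivity|]. split; [reflexivity|]. intros k Hk. assert (k = O) by lia. subst. simpl.
 split; [auto|]. split; [intros; auto|]. split.
 - exists (f a). apply (filterlim_filter_le_1 (F := locally a)). apply filter_le_within. apply Hf.
 - exists (f b). apply (filterlim_filter_le_1 (F := locally b)). apply filter_le_within. apply Hf. Qed.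

Lemma Bmul_aux_notin js k0 w i : ~ In i js -> Bmul_aux js k0 w i = 0.
Proof. revert k0. induction js as [|j js IH]; intros k0 H; simpl; [auto|].
 destruct (Nat.eqb_spec j i). subst; exfalso; apply H; simpl; auto. rewrite IH. ring. intros Hin; apply H; simpl; auto. Qed.

Lemma Bmul_aux_cont js k0 (w : R -> nat -> R) i t : (forall k, continuous (fun s => w s k) t) -> continuous (fun s => Bmul_aux js k0 (w s) i) t.
Proof. revert k0. induction js as [|j js IH]; intros k0 H; simpl. apply cont_const.
 apply cont_plus; auto. destruct (Nat.eqb j i); auto. apply cont_const. Qed.

Lemma Bmul_aux_lin n js k0 (eta : nat -> R) (w : nat -> nat -> R) i :
  Bmul_aux js k0 (fun k => sum_to n (fun j => eta j * w j k)) i = sum_to n (fun j => eta j * Bmul_aux js k0 (w j) i).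
Proof. revert k0. induction js as [|j js IH]; intros k0; simpl.
 - symmetry. apply sum_to_zero. intros; ring.
 - rewrite IH. destruct (Nat.eqb j i).
   + rewrite <- sum_to_plus. apply sum_to_ext. intros k _. ring.
   + rewrite Rplus_0_l. apply sum_to_ext. intros k _. ring. Qed.

Definition sumsq (lam : nat -> R) (js : list nat) : R := fold_right (fun j s => lam j * lam j + s) 0 js.

Lemma Bmul_aux_dual n js k0 (lam : nat -> R) (w : nat -> R) :
  (forall j, In j js -> inV n j) -> (forall m, (m < length js)%nat -> w (k0 + m)%nat = lam (nth m js 0%nat)) ->
  sum_to n (fun i => lam i * Bmul_aux js k0 w i) = sumsq lam js.
Proof. revert k0. induction js as [|j js IH]; intros k0 HV Hw; simpl.
 - apply sum_to_zero. intros; ring.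
 - rewrite (sum_to_ext n _ (fun i => lam i * (if Nat.eqb j i then w k0 else 0) + lam i * Bmul_aux js (S k0) w i)) by (intros; ring).
   rewrite sum_to_plus. rewrite IH. 
   + rewrite (sum_to_single n _ j). rewrite Nat.eqb_refl. specialize (Hw O ltac:(simpl; lia)). rewrite Nat.add_0_r in Hw. simpl in Hw. rewrite Hw. ring.
     apply HV; simpl; auto. intros k Hk Hkj. destruct (Nat.eqb_spec j k). congruence. ring.
   + intros; apply HV; simpl; auto.
   + intros m Hm. specialize (Hw (S m) ltac:(simpl; lia)). replace (S k0 + m)%nat with (k0 + S m)%nat by lia. rewrite Hw. reflexivity. Qed.

Lemma sumsq_nonneg lam js : 0 <= sumsq lam js.
Proof. induction js; simpl. lra. pose proof (Rle_0_sqr (lam a)). unfold Rsqr in H. lra. Qed.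

Lemma sumsq_zero lam js : sumsq lam js = 0 -> forall j, In j js -> lam j = 0.
Proof. induction js as [|a js IH]; simpl; intros H j Hj; [tauto|].
 pose proof (Rle_0_sqr (lam a)). unfold Rsqr in H0. pose proof (sumsq_nonneg lam js).
 destruct Hj as [<-|Hj]. apply Rsqr_0_uniq. unfold Rsqr. lra. apply IH; auto. lra. Qed.

Lemma sumsq_cont (lam : R -> nat -> R) js t : (forall j, In j js -> continuous (fun s => lam s j) t) -> continuous (fun s => sumsq (lam s) js) t.
Proof. induction js as [|a js IH]; simpl; intros H. apply cont_const.
 apply cont_plus. apply cont_mult; apply H; auto. apply IH; auto. Qed.

Lemma pos_int_zero (g : R -> R) a b : a < b -> (forall t, continuous g t) -> (forall t, 0 <= g t) -> RInt g a b = 0 ->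
  forall t, a <= t <= b -> g t = 0.
Proof. intros Hab Hc Hp HI t Ht. apply NNPP. intros Hne.
 assert (Hgt : 0 < g t) by (destruct (Hp t); auto; congruence).
 destruct (proj1 (cont_iff g t) (Hc t) (g t / 2) ltac:(lra)) as [d [Hd Hdd]].
 set (c := Rmax a (t - d / 2)). set (e := Rmin b (t + d / 2)).
 assert (Hc1 : a <= c /\ t - d / 2 <= c /\ c <= t) by (unfold c, Rmax; destruct Rle_dec; lra).
 assert (He1 : e <= b /\ e <= t + d / 2 /\ t <= e) by (unfold e, Rmin; destruct Rle_dec; lra).
 assert (Hce : c < e) by (unfold c, e, Rmax, Rmin in *; repeat destruct Rle_dec; lra).
 assert (Hex : forall u v, ex_RInt g u v) by (intros; apply exR_cont; auto).
 assert (E1 := RIntR_chasles g a c b (Hex _ _) (Hex _ _)).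
 assert (E2 := RIntR_chasles g c e b (Hex _ _) (Hex _ _)).
 assert (P1 : 0 <= RInt g a c) by (apply RInt_ge_0; auto; lra).
 assert (P3 : 0 <= RInt g e b) by (apply RInt_ge_0; auto; lra).
 assert (P2 : RInt (fun _ => g t / 2) c e <= RInt g c e).
 { apply RIntR_le; [lra| apply exR_cont; intros; apply cont_const | auto |]. intros x Hx. assert (Rabs (x - t) < d) by (unfold Rabs; destruct Rcase_abs; lra).
   specialize (Hdd x H). unfold Rabs in Hdd; destruct Rcase_abs; lra. }
 assert (E3 : RInt (fun _ => g t / 2) c e = (e - c) * (g t / 2)).
 { apply RIntR_unique. assert (K := @is_RInt_const R_NormedModule c e (g t / 2)). exact K. }
 assert (0 < (e - c) * (g t / 2)) by (apply Rmult_lt_0_compat; lra). lra. Qed.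

Lemma is_RInt_lincomb n (F : nat -> R -> R) (l eta : nat -> R) a t :
  (forall j, (1 <= j <= n)%nat -> is_RInt (F j) a t (l j)) ->
  is_RInt (fun s => sum_to n (fun j => eta j * F j s)) a t (sum_to n (fun j => eta j * l j)).
Proof. intros H. apply (is_RInt_sum_to n (fun j s => eta j * F j s)). intros j Hj.
 apply (is_RInt_scal (V:=R_NormedModule) (F j) a t (eta j) (l j)). auto. Qed.

Lemma psum_zero K : psum K (fun _ => 0) = 0.
Proof. induction K; simpl; lra. Qed.

Lemma psum_zero' K f : (forall k, f k = 0) -> psum K f = 0.
Proof. intros H. induction K; simpl. auto. rewrite IHK, H; ring. Qed.

Lemma Fint_lin n A (F : nat -> R -> nat -> R) (Y : nat -> R -> nat -> R) (eta : nat -> R) i s :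
  Fint n A (fun t i => sum_to n (fun j => eta j * F j t i)) (fun t k => sum_to n (fun j => eta j * Y j t k)) i s
  = sum_to n (fun j => eta j * Fint n A (F j) (Y j) i s).
Proof. unfold Fint.
 rewrite (sum_to_ext n (fun j => eta j * (sum_to n (fun k => A s i k * Y j s k) + F j s i))
   (fun j => sum_to n (fun k => eta j * (A s i k * Y j s k)) + eta j * F j s i)) by (intros; rewrite sum_to_scal; ring).
 rewrite sum_to_plus. f_equal. rewrite sum_to_swap. apply sum_to_ext. intros k _.
 rewrite <- sum_to_scal. apply sum_to_ext. intros; ring. Qed.

Lemma lam_lin n (A : R -> nat -> nat -> R) (L : nat -> R -> nat -> R) (eta : nat -> R) r j :
  sum_to n (fun i => A r i j * sum_to n (fun j' => eta j' * L j' r i)) = sum_to n (fun j' => eta j' * sum_to n (fun i => A r i j * L j' r i)).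
Proof. rewrite (sum_to_ext n (fun i => A r i j * sum_to n (fun j' => eta j' * L j' r i)) (fun i => sum_to n (fun j' => eta j' * (A r i j * L j' r i)))).
 2: { intros; rewrite <- sum_to_scal; apply sum_to_ext; intros; ring. }
 rewrite sum_to_swap. apply sum_to_ext. intros. rewrite <- sum_to_scal. reflexivity. Qed.

Lemma only_if n C T (t0 t1 : R) (VC : list nat) :
  chains_ok n C -> t0 < t1 ->
  (forall A : R -> nat -> nat -> R,
      mat_piecewise_continuous n A ->
      almost_everywhere (fun t => in_P n C T (A t)) ->
      controllable n A VC t0 t1) ->
  forall s, is_source C s -> In s VC.
Proof. intros Hok Hab Hall s Hs. apply NNPP. intros HnIn.
 assert (HsV : inV n s).
 { destruct Hs as [c [Hc Hh]]. destruct Hok as [_ [_ HV]]. apply HV. apply in_concat. exists c. split; auto.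
   destruct c; simpl in Hh; [congruence|]. injection Hh as ->. simpl; auto. }
 set (A0 := fun (_ : R) (i j : nat) => if excluded_middle_informative (chain_edge C j i) then 1 else 0).
 assert (HA0s : forall t j, A0 t s j = 0).
 { intros t j. unfold A0. destruct excluded_middle_informative as [He|He]; auto. exfalso. apply (source_not_target n C s j Hok Hs He). }
 assert (Hpc : mat_piecewise_continuous n A0).
 { intros i j _ _. apply cont_pc. intros; apply cont_const. }
 assert (Hae : almost_everywhere (fun t => in_P n C T (A0 t))).
 { exists (fun _ => False). split.
   + intros eps He. exists (fun _ => 0), (fun _ => 0). split; [intros; lra|]. split; [intros t []|].
     intros K. rewrite psum_zero' by (intros; ring). lra.
   + intros t _. exists (fun u v => chain_edge C u v). split; [split; [|split]|].
     * intros u v Huv. apply (chain_edge_inV n C); auto.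
     * auto.
     * intros u v _ _ Hnc _ Hce. contradiction.
     * intros i j Hi Hj Hij. unfold A0. destruct excluded_middle_informative; split; intros; auto; try lra; tauto. }
 destruct (Hall A0 Hpc Hae (fun _ : nat => 0) (fun i : nat => if Nat.eqb i s then 1 else 0)) as [u [x [_ [Hsol Hend]]]].
 specialize (Hsol t1 ltac:(lra) s HsV). destruct (Hend s HsV) as [E0 E1]. rewrite Nat.eqb_refl in E1.
   assert (H0 : is_RInt (fun _ : R => 0) t0 t1 (x t1 s - x t0 s)).
   { assert (Hz : forall r, Amul n (A0 r) (x r) s + Bmul VC (u r) s = 0).
     { intros rr. unfold Amul, Bmul. rewrite sum_to_zero. rewrite Bmul_aux_notin by auto. ring. intros k _. rewrite HA0s. ring. }
     exact (is_RInt_ext (V:=R_NormedModule) (fun r => Amul n (A0 r) (x r) s + Bmul VC (u r) s) (fun _ => 0) t0 t1 _ (fun rr _ => Hz rr) Hsol). }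
   apply RIntR_unique in H0. assert (K := @is_RInt_const R_NormedModule t0 t1 0). apply RIntR_unique in K.
   change (scal (t1 - t0) 0) with ((t1 - t0) * 0) in K. rewrite E0, E1 in H0. lra. Qed.

Lemma isR_plus (f g : R -> R) a b lf lg : is_RInt f a b lf -> is_RInt g a b lg -> is_RInt (fun t => f t + g t) a b (lf + lg).
Proof. intros; apply (is_RInt_plus (V:=R_NormedModule) f g); auto. Qed.

Lemma isR_ext (f g : R -> R) a b l : (forall x, f x = g x) -> is_RInt f a b l -> is_RInt g a b l.
Proof. intros H; apply (is_RInt_ext (V:=R_NormedModule) f g). intros; auto. Qed.

Lemma isR_val (f : R -> R) a b (l l' : R) : l = l' -> is_RInt f a b l -> is_RInt f a b l'.
Proof. intros <-; auto. Qed.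

Lemma if_dir n C T t0 t1 VC : chains_ok n C -> time_function n C T -> t0 < t1 -> (forall j, In j VC -> inV n j) ->
  (forall s, is_source C s -> In s VC) -> forall A, mat_piecewise_continuous n A ->
  almost_everywhere (fun t => in_P n C T (A t)) -> controllable n A VC t0 t1.
Proof.
intros Hok Htf Hab HVC Hsrc A HApc [N [HN HP]] x0 xf.
assert (HA : forall i j, inV n i -> inV n j -> pcw t0 t1 (fun t => A t i j)) by (intros; apply pc_pcw; auto; apply HApc; auto).
set (e := fun j i : nat => if Nat.eqb i j then 1 else 0).
set (LAM := fun j => proj1_sig (constructive_indefinite_description _ (adjoint n t0 t1 A (e j) Hab HA))).
assert (HLAM : forall j, (forall i, inV n i -> forall t, continuous (fun s => LAM j s i) t) /\ (forall i, inV n i -> LAM j t1 i = e j i) /\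
   (forall t i, t0 <= t <= t1 -> inV n i -> is_RInt (fun r => sum_to n (fun k => A r k i * LAM j r k)) t t1 (LAM j t i - e j i))).
{ intros j. exact (proj2_sig (constructive_indefinite_description _ (adjoint n t0 t1 A (e j) Hab HA))). }
set (U := fun j t k => if Nat.ltb k (length VC) then LAM j t (nth k VC 0%nat) else 0).
assert (HU : forall j k t, continuous (fun s => U j s k) t).
{ intros j k t. unfold U. destruct (Nat.ltb_spec k (length VC)). apply (proj1 (HLAM j)). apply HVC. apply nth_In; auto. apply cont_const. }
assert (HFc : forall j i, inV n i -> forall t, continuous (fun s => Bmul VC (U j s) i) t).
{ intros. unfold Bmul. apply Bmul_aux_cont. intros; apply HU. }
set (XX := fun j => proj1_sig (constructive_indefinite_description _ (volterra n t0 t1 A (fun t i => Bmul VC (U j t) i) (fun _ => 0) Hab HA (HFc j)))).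
assert (HXX : forall j, (forall i, inV n i -> forall t, continuous (fun s => XX j s i) t) /\ (forall i, inV n i -> XX j t0 i = 0) /\
   (forall t i, t0 <= t <= t1 -> inV n i -> is_RInt (Fint n A (fun t i => Bmul VC (U j t) i) (XX j) i) t0 t (XX j t i - 0))).
{ intros j. exact (proj2_sig (constructive_indefinite_description _ (volterra n t0 t1 A (fun t i => Bmul VC (U j t) i) (fun _ => 0) Hab HA (HFc j)))). }
set (lamE := fun (eta : nat -> R) t i => sum_to n (fun j => eta j * LAM j t i)).
set (uE := fun (eta : nat -> R) t k => sum_to n (fun j => eta j * U j t k)).
set (xE := fun (eta : nat -> R) t i => sum_to n (fun j => eta j * XX j t i)).
assert (Hlin : forall eta,
  (forall i, inV n i -> forall t, continuous (fun s => xE eta s i) t) /\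
  (forall i, inV n i -> xE eta t0 i = 0) /\
  (forall t i, t0 <= t <= t1 -> inV n i -> is_RInt (Fint n A (fun t i => Bmul VC (uE eta t) i) (xE eta) i) t0 t (xE eta t i - xE eta t0 i)) /\
  (forall k t, continuous (fun s => uE eta s k) t)).
{ intros eta. split; [|split; [|split]].
  - intros i Hi t. apply (continuous_sum_to n (fun j s => eta j * XX j s i)). intros j Hj. apply cont_mult. apply cont_const. apply (proj1 (HXX j)); auto.
  - intros i Hi. unfold xE. apply sum_to_zero. intros j Hj. rewrite (proj1 (proj2 (HXX j))); auto. ring.
  - intros t i Ht Hi.
    assert (E0 : xE eta t0 i = 0). { unfold xE. apply sum_to_zero. intros j Hj. rewrite (proj1 (proj2 (HXX j))); auto. ring. }
    rewrite E0.
    apply (isR_ext (fun s => sum_to n (fun j => eta j * Fint n A (fun t i => Bmul VC (U j t) i) (XX j) i s))).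
    + intros s. symmetry. transitivity (Fint n A (fun t i => sum_to n (fun j => eta j * Bmul VC (U j t) i)) (fun t k => sum_to n (fun j => eta j * XX j t k)) i s).
      * unfold Fint. f_equal. unfold Bmul, uE. apply Bmul_aux_lin.
      * exact (Fint_lin n A (fun j t i => Bmul VC (U j t) i) XX eta i s).
    + apply (isR_val _ _ _ (sum_to n (fun j => eta j * (XX j t i - 0)))).
      unfold xE. rewrite Rminus_0_r. apply sum_to_ext. intros; ring.
      apply (is_RInt_lincomb n (fun j s => Fint n A (fun t i => Bmul VC (U j t) i) (XX j) i s) (fun j => XX j t i - 0) eta t0 t).
      intros j Hj. apply (proj2 (proj2 (HXX j))); auto.
  - intros k t. apply (continuous_sum_to n (fun j s => eta j * U j s k)). intros j Hj. apply cont_mult. apply cont_const. apply HU. }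
assert (HlinL : forall eta,
  (forall i, inV n i -> forall t, continuous (fun s => lamE eta s i) t) /\
  (forall t i, t0 <= t <= t1 -> inV n i -> is_RInt (fun r => sum_to n (fun k => A r k i * lamE eta r k)) t t1 (lamE eta t i - lamE eta t1 i)) /\
  (forall i, inV n i -> lamE eta t1 i = eta i)).
{ intros eta.
  assert (Hb : forall i, inV n i -> lamE eta t1 i = eta i).
  { intros i Hi. unfold lamE. rewrite (sum_to_single n _ i Hi). rewrite (proj1 (proj2 (HLAM i))); auto. unfold e. rewrite Nat.eqb_refl. ring.
    intros j Hj Hji. rewrite (proj1 (proj2 (HLAM j))); auto. unfold e. destruct (Nat.eqb_spec i j). congruence. ring. }
  split; [|split; [|auto]].
  - intros i Hi t. apply (continuous_sum_to n (fun j s => eta j * LAM j s i)). intros j Hj. apply cont_mult. apply cont_const. apply (proj1 (HLAM j)); auto.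
  - intros t i Ht Hi. rewrite Hb by auto.
    apply (isR_ext (fun r => sum_to n (fun j => eta j * sum_to n (fun k => A r k i * LAM j r k)))).
    + intros r. symmetry. exact (lam_lin n A LAM eta r i).
    + apply (isR_val _ _ _ (sum_to n (fun j => eta j * (LAM j t i - e j i)))).
      * transitivity (lamE eta t i - lamE eta t1 i). 2: rewrite Hb; auto.
        unfold lamE. rewrite sum_to_minus. apply sum_to_ext. intros j Hj.
        rewrite (proj1 (proj2 (HLAM j))); auto. ring.
      * apply (is_RInt_lincomb n (fun j r => sum_to n (fun k => A r k i * LAM j r k)) (fun j => LAM j t i - e j i) eta t t1).
        intros j Hj. apply (proj2 (proj2 (HLAM j))); auto. }
set (M := fun i j => XX j t1 i).
assert (HxM : forall eta i, xE eta t1 i = sum_to n (fun j => M i j * eta j)).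
{ intros eta i. unfold xE, M. apply sum_to_ext. intros; ring. }
assert (Hinj : forall eta : nat -> R, (forall i, inV n i -> sum_to n (fun j => Rmult (M i j) (eta j)) = R0) -> forall j, inV n j -> eta j = R0).
{ intros eta Heta j Hj.
  destruct (Hlin eta) as [Hxc [Hx0 [Hxe Huc]]]. destruct (HlinL eta) as [Hlc [Hle Hlb]].
  assert (Hfc : forall i, inV n i -> forall t, continuous (fun s => Bmul VC (uE eta s) i) t).
  { intros. unfold Bmul. apply Bmul_aux_cont. auto. }
  pose proof (duality n t0 t1 A (fun t i => Bmul VC (uE eta t) i) (xE eta) (lamE eta) Hab HA Hfc Hxc Hlc Hxe Hle) as Dual.
  rewrite (sum_to_zero n (fun i => lamE eta t1 i * xE eta t1 i)) in Dual.
  2: { intros i Hi. rewrite HxM. rewrite Heta by auto. ring. }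
  rewrite (sum_to_zero n (fun i => lamE eta t0 i * xE eta t0 i)) in Dual.
  2: { intros i Hi. rewrite Hx0 by auto. ring. }
  assert (Hsq : forall s, sum_to n (fun i => lamE eta s i * Bmul VC (uE eta s) i) = sumsq (lamE eta s) VC).
  { intros s. unfold Bmul. apply Bmul_aux_dual. auto. intros m Hm. simpl. unfold uE, lamE. apply sum_to_ext. intros j' _.
    unfold U. destruct (Nat.ltb_spec m (length VC)). auto. lia. }
  rewrite (RIntR_ext _ (fun s => sumsq (lamE eta s) VC)) in Dual by (intros; apply Hsq).
  assert (Hz : forall t, t0 <= t <= t1 -> sumsq (lamE eta t) VC = 0).
  { apply (pos_int_zero (fun s => sumsq (lamE eta s) VC) t0 t1 Hab).
    - intros t. apply sumsq_cont. intros v Hv. apply Hlc. auto.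
    - intros; apply sumsq_nonneg.
    - lra. }
  rewrite <- (Hlb j Hj).
  apply (structural n C T t0 t1 A N (lamE eta) Hok Htf Hab HN HP HA Hlc Hle); auto. 2: lra.
  intros s Hs t Ht. apply (sumsq_zero (lamE eta t) VC (Hz t Ht)). auto. }
destruct (volterra n t0 t1 A (fun _ _ => 0) x0 Hab HA) as [Z [HZc [HZ0 HZe]]].
{ intros; apply cont_const. }
destruct (linalg n M Hinj (fun i => xf i - Z t1 i)) as [eta Heta].
destruct (Hlin eta) as [Hxc [Hx0 [Hxe Huc]]].
exists (uE eta), (fun t i => Z t i + xE eta t i). split; [|split].
- intros k _. apply cont_pc. apply Huc.
- intros t Ht i Hi.
  apply (isR_ext (fun s => Fint n A (fun _ _ => 0) Z i s + Fint n A (fun t i => Bmul VC (uE eta t) i) (xE eta) i s)).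
  + intros s. unfold Fint, Amul. rewrite <- Rplus_assoc, Rplus_0_r. f_equal. rewrite <- sum_to_plus. apply sum_to_ext. intros; ring.
  + apply (isR_val _ _ _ ((Z t i - x0 i) + (xE eta t i - xE eta t0 i))). rewrite HZ0 by auto. ring.
    apply isR_plus; auto.
- intros i Hi. split.
  + rewrite HZ0, Hx0 by auto. ring.
  + rewrite HxM. rewrite Heta by auto. ring.
Qed.

Theorem theorem9 (n : nat) (C : list (list nat)) (T : nat -> nat)
    (t0 t1 : R) (VC : list nat) :
  chains_ok n C -> time_function n C T -> t0 < t1 ->
  NoDup VC -> (forall j, In j VC -> inV n j) ->
  ((forall A : R -> nat -> nat -> R,
      mat_piecewise_continuous n A ->
      almost_everywhere (fun t => in_P n C T (A t)) ->
      controllable n A VC t0 t1)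
   <-> (forall s, is_source C s -> In s VC)).
Proof.
intros Hok Htf Hab Hnd HVC. split.
- apply (only_if n C T t0 t1 VC Hok Hab).
- intros Hsrc A HApc Hae. apply (if_dir n C T t0 t1 VC); auto.
Qed.
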